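(* Let $\Omega\subseteq\mathbb{C}$ be a domain with $\Omega=\{\bar z:z\in\Omega\}$, $\Omega^+=\Omega\cap\{\mathrm{Im}z>0\}$, $\Omega^-=\Omega\cap\{\mathrm{Im}z<0\}$, $I=\Omega\cap\mathbb{R}$. Let $\mathcal P$ be a totally geodesic vertical plane of $\mathbb{H}^2\times\mathbb{R}$ (the product of a geodesic of $\mathbb{H}^2$ with $\mathbb{R}$) and $\sigma$ the isometric reflection of $\mathbb{H}^2\times\mathbb{R}$ across $\mathcal P$. Let $\psi:\Omega^+\cup I\to\mathbb{H}^2\times\mathbb{R}$ be a conformal $C^2$ immersion with regular vertical projection and constant mean curvature $1/2$, such that $\psi(I)\subset\mathcal P$ and the unit normal $\eta$ of $\psi$ is tangent to $\mathcal P$ along $I$. Then the map defined by $\psi(z)$ for $z\in\Omega^+\cup I$ and $\sigma(\psi(\bar z))$ for $z\in\Omega^-$ is a conformal immersion $\Omega\to\mathbb{H}^2\times\mathbb{R}$ with constant mean curvature $1/2$.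
   Context: $\mathbb{H}^2\times\mathbb{R}\subset\mathbb{L}^4=(\mathbb{R}^4,-dx_0^2+dx_1^2+dx_2^2+dx_3^2)$, $\mathbb{H}^2=\{-x_0^2+x_1^2+x_2^2=-1,x_0>0\}$. For a conformal immersion $\psi=(N,h)$, $\eta=(\hat N,u)$ denotes the unit normal tangent to $\mathbb{H}^2\times\mathbb{R}$; regular vertical projection means $u\ne0$ everywhere, and the mean curvature is taken with respect to the orientation $u>0$. *)

(* Defs.v *)
From Stdlib Require Export Reals.
From Coquelicot Require Export Coquelicot.
Open Scope R_scope.

(** Points/vectors of L^4 = (R^4, -dx0^2+dx1^2+dx2^2+dx3^2). *)
Record V4 := mk4 { c0 : R; c1 : R; c2 : R; c3 : R }.

Definition lor (v w : V4) : R :=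
  - c0 v * c0 w + c1 v * c1 w + c2 v * c2 w + c3 v * c3 w.

Definition vadd (v w : V4) : V4 :=
  mk4 (c0 v + c0 w) (c1 v + c1 w) (c2 v + c2 w) (c3 v + c3 w).
Definition vscal (k : R) (v : V4) : V4 :=
  mk4 (k * c0 v) (k * c1 v) (k * c2 v) (k * c3 v).

Definition in_H2xR (p : V4) : Prop :=
  - c0 p ^ 2 + c1 p ^ 2 + c2 p ^ 2 = -1 /\ 0 < c0 p.

(** The H^2-component N of p, viewed in L^4 (the normal of H^2 x R at p). *)
Definition Nvec (p : V4) : V4 := mk4 (c0 p) (c1 p) (c2 p) 0.

(** Plane topology on C = R^2 (z = x + i y represented by (x,y)). *)
Definition open2 (U : R -> R -> Prop) : Prop :=
  forall x y, U x y -> exists e, 0 < e /\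
    forall x' y', Rabs (x' - x) < e -> Rabs (y' - y) < e -> U x' y'.

Definition connected2 (U : R -> R -> Prop) : Prop :=
  ~ (exists A B : R -> R -> Prop, open2 A /\ open2 B /\
       (forall x y, U x y -> A x y \/ B x y) /\
       (forall x y, U x y -> A x y -> B x y -> False) /\
       (exists x y, U x y /\ A x y) /\ (exists x y, U x y /\ B x y)).

Definition is_domain (U : R -> R -> Prop) : Prop :=
  open2 U /\ connected2 U /\ exists x y, U x y.

Definition cont2 (g : R -> R -> R) (x y : R) : Prop :=
  forall e, 0 < e -> exists d, 0 < d /\
    forall x' y', Rabs (x' - x) < d -> Rabs (y' - y) < d ->
      Rabs (g x' y' - g x y) < e.

Definition dx (g : R -> R -> R) : R -> R -> R :=
  fun x y => Derive (fun t => g t y) x.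
Definition dy (g : R -> R -> R) : R -> R -> R :=
  fun x y => Derive (fun t => g x t) y.
Definition exdx (g : R -> R -> R) (x y : R) : Prop := ex_derive (fun t => g t y) x.
Definition exdy (g : R -> R -> R) (x y : R) : Prop := ex_derive (fun t => g x t) y.

Definition C2 (g : R -> R -> R) (U : R -> R -> Prop) : Prop :=
  forall x y, U x y ->
    exdx g x y /\ exdy g x y /\
    exdx (dx g) x y /\ exdy (dx g) x y /\ exdx (dy g) x y /\ exdy (dy g) x y /\
    cont2 g x y /\ cont2 (dx g) x y /\ cont2 (dy g) x y /\
    cont2 (dx (dx g)) x y /\ cont2 (dy (dx g)) x y /\
    cont2 (dx (dy g)) x y /\ cont2 (dy (dy g)) x y.

Definition cmp0 (f : R -> R -> V4) := fun x y => c0 (f x y).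
Definition cmp1 (f : R -> R -> V4) := fun x y => c1 (f x y).
Definition cmp2 (f : R -> R -> V4) := fun x y => c2 (f x y).
Definition cmp3 (f : R -> R -> V4) := fun x y => c3 (f x y).

Definition C2V (f : R -> R -> V4) (U : R -> R -> Prop) : Prop :=
  C2 (cmp0 f) U /\ C2 (cmp1 f) U /\ C2 (cmp2 f) U /\ C2 (cmp3 f) U.

Definition DX (f : R -> R -> V4) (x y : R) : V4 :=
  mk4 (dx (cmp0 f) x y) (dx (cmp1 f) x y) (dx (cmp2 f) x y) (dx (cmp3 f) x y).
Definition DY (f : R -> R -> V4) (x y : R) : V4 :=
  mk4 (dy (cmp0 f) x y) (dy (cmp1 f) x y) (dy (cmp2 f) x y) (dy (cmp3 f) x y).
Definition LapV (f : R -> R -> V4) (x y : R) : V4 :=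
  mk4 (dx (dx (cmp0 f)) x y + dy (dy (cmp0 f)) x y)
      (dx (dx (cmp1 f)) x y + dy (dy (cmp1 f)) x y)
      (dx (dx (cmp2 f)) x y + dy (dy (cmp2 f)) x y)
      (dx (dx (cmp3 f)) x y + dy (dy (cmp3 f)) x y).

Definition conformal_immersion_at (f : R -> R -> V4) (x y : R) : Prop :=
  in_H2xR (f x y) /\
  lor (DX f x y) (DX f x y) = lor (DY f x y) (DY f x y) /\
  lor (DX f x y) (DY f x y) = 0 /\
  0 < lor (DX f x y) (DX f x y).

(** n = (hat N, u) is a unit normal of f at (x,y), tangent to H^2 x R. *)
Definition unit_normal (f : R -> R -> V4) (x y : R) (n : V4) : Prop :=
  lor n (Nvec (f x y)) = 0 /\ lor n n = 1 /\
  lor n (DX f x y) = 0 /\ lor n (DY f x y) = 0.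

(** Regular vertical projection at (x,y): u <> 0. *)
Definition regular_vertical_projection_at (f : R -> R -> V4) (x y : R) : Prop :=
  forall n, unit_normal f x y n -> c3 n <> 0.

(** Mean curvature H at (x,y) w.r.t. the unit normal with u > 0:
    H = (1/2) trace II, i.e. <psi_xx + psi_yy, eta> = 2 lambda^2 H with
    lambda^2 = <psi_x, psi_x> (conformal factor). *)
Definition mean_curvature_up_at (f : R -> R -> V4) (H x y : R) : Prop :=
  exists n, unit_normal f x y n /\ 0 < c3 n /\
    lor (LapV f x y) n = 2 * lor (DX f x y) (DX f x y) * H.

(** Totally geodesic vertical plane P = gamma x R, gamma = H^2 cap a^perp,
    a a spacelike unit vector of L^3 (embedded with c3 a = 0). *)
Definition vertical_plane (a : V4) : Prop := c3 a = 0 /\ lor a a = 1.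
Definition in_plane (a p : V4) : Prop := in_H2xR p /\ lor p a = 0.
Definition sigma (a p : V4) : V4 := vadd p (vscal (-2 * lor p a) a).

Definition reflected (a : V4) (psi : R -> R -> V4) : R -> R -> V4 :=
  fun x y => if Rle_dec 0 y then psi x y else sigma a (psi x (- y)).

(* Main.v *)
Require Import Defs.
From Stdlib Require Import Lra Psatz FunctionalExtensionality.

Lemma loc_of (P : R -> Prop) x e : 0 < e -> (forall t, Rabs (t - x) < e -> P t) -> locally x P.
Proof. intros He H. exists (mkposreal e He). intros t Ht. apply H. exact Ht. Qed.

Lemma isd_plus f g x a b : is_derive f x a -> is_derive g x b -> is_derive (fun t => f t + g t) x (a + b).
Proof. intros H1 H2. exact (is_derive_plus f g x a b H1 H2). Qed.
Lemma isd_mult f g x a b : is_derive f x a -> is_derive g x b -> is_derive (fun t => f t * g t) x (a * g x + f x * b).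
Proof. intros H1 H2. exact (is_derive_mult f g x a b H1 H2 Rmult_comm). Qed.
Lemma isd_scal f x k a : is_derive f x a -> is_derive (fun t => k * f t) x (k * a).
Proof. intros H. exact (is_derive_scal f x k a H). Qed.
Lemma isd_opp f x a : is_derive f x a -> is_derive (fun t => - f t) x (- a).
Proof. intros H. exact (is_derive_opp f x a H). Qed.
Lemma isd_const (c : R) x : is_derive (fun _ => c) x 0.
Proof. exact (is_derive_const c x). Qed.

Lemma halfline_zero (f : R -> R) (t0 l e : R) : is_derive f t0 l -> 0 < e ->
  (forall s, t0 <= s -> s < t0 + e -> f s = f t0) -> l = 0.
Proof.
  intros Hd He Hc. apply is_derive_Reals in Hd.
  destruct (Req_dec l 0) as [|Hl]; [assumption|exfalso].
  assert (Ha: 0 < Rabs l) by (apply Rabs_pos_lt; auto).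
  destruct (Hd (Rabs l) Ha) as [d Hdd].
  pose proof (cond_pos d) as Hd0.
  set (h := Rmin (d/2) (e/2)).
  assert (hpos: 0 < h) by (unfold h; apply Rmin_pos; lra).
  assert (h1: h <= d/2) by (unfold h; apply Rmin_l).
  assert (h2: h <= e/2) by (unfold h; apply Rmin_r).
  assert (hne: h <> 0) by lra.
  assert (hd: Rabs h < d) by (rewrite Rabs_pos_eq; lra).
  specialize (Hdd h hne hd). rewrite (Hc (t0 + h)) in Hdd by lra.
  replace ((f t0 - f t0)/h - l) with (-l) in Hdd by (field; auto).
  rewrite Rabs_Ropp in Hdd. lra.
Qed.

Lemma pw_derive (A B : R -> R) l : is_derive A 0 l -> is_derive B 0 (-l) -> A 0 = B 0 ->
  is_derive (fun t => if Rle_dec 0 t then A t else B (-t)) 0 l.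
Proof.
  intros HA HB H0.
  assert (HC : is_derive (fun t => B (- t)) 0 l).
  { assert (HB' : is_derive B (- 0) (-l)) by (rewrite Ropp_0; exact HB).
    pose proof (is_derive_comp B Ropp 0 (-l) (-1) HB' (isd_opp _ _ _ (is_derive_id 0))) as Hc.
    replace l with (scal (-1) (-l)). exact Hc. unfold scal; simpl; unfold mult; simpl; ring. }
  apply is_derive_Reals in HA. apply is_derive_Reals in HC. apply is_derive_Reals.
  intros eps He.
  destruct (HA eps He) as [d1 Hd1]. destruct (HC eps He) as [d2 Hd2].
  assert (Hm: 0 < Rmin d1 d2) by (apply Rmin_pos; apply cond_pos).
  exists (mkposreal _ Hm). intros h hne hlt. simpl in hlt.
  assert (l1 : Rabs h < d1) by (eapply Rlt_le_trans; [exact hlt| apply Rmin_l]).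
  assert (l2 : Rabs h < d2) by (eapply Rlt_le_trans; [exact hlt| apply Rmin_r]).
  destruct (Rle_dec 0 0) as [_|n]; [|lra].
  destruct (Rle_dec 0 (0 + h)) as [_|_].
  - apply Hd1; auto.
  - rewrite H0. replace (B 0) with (B (- 0)) by (rewrite Ropp_0; reflexivity).
    apply Hd2; auto.
Qed.

Definition box_eq (f g : R -> R -> R) x y := exists e, 0 < e /\
  forall x' y', Rabs (x'-x) < e -> Rabs (y'-y) < e -> f x' y' = g x' y'.

Lemma box_eq_open (O : R -> R -> Prop) f g x y : open2 O -> O x y ->
  (forall x y, O x y -> f x y = g x y) -> box_eq f g x y.
Proof.
  intros HO Hxy H. destruct (HO x y Hxy) as [e [He He2]].
  exists e; split; auto.
Qed.

Lemma box_eq_shrink f g x y : box_eq f g x y -> exists e, 0 < e /\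
  forall x' y', Rabs (x'-x) < e -> Rabs (y'-y) < e -> box_eq f g x' y'.
Proof.
  intros [e [He H]]. exists (e/2); split; [lra|].
  intros x' y' H1 H2. exists (e/2); split; [lra|].
  intros x'' y'' H3 H4. apply H.
  - replace (x'' - x) with ((x''-x') + (x'-x)) by ring.
    eapply Rle_lt_trans; [apply Rabs_triang|lra].
  - replace (y'' - y) with ((y''-y') + (y'-y)) by ring.
    eapply Rle_lt_trans; [apply Rabs_triang|lra].
Qed.

Lemma box_eq_dx f g x y : box_eq f g x y -> dx f x y = dx g x y /\ (exdx f x y -> exdx g x y).
Proof.
  intros [e [He H]].
  assert (L : locally x (fun t => f t y = g t y)).
  { apply (loc_of _ _ e He). intros t Ht. apply H; auto. rewrite Rminus_diag, Rabs_R0; lra. }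
  split; [apply (Derive_ext_loc _ _ _ L)|intro; apply (ex_derive_ext_loc _ _ _ L); auto].
Qed.

Lemma box_eq_dy f g x y : box_eq f g x y -> dy f x y = dy g x y /\ (exdy f x y -> exdy g x y).
Proof.
  intros [e [He H]].
  assert (L : locally y (fun t => f x t = g x t)).
  { apply (loc_of _ _ e He). intros t Ht. apply H; auto. rewrite Rminus_diag, Rabs_R0; lra. }
  split; [apply (Derive_ext_loc _ _ _ L)|intro; apply (ex_derive_ext_loc _ _ _ L); auto].
Qed.

Lemma box_eq_ddx f g x y : box_eq f g x y -> box_eq (dx f) (dx g) x y.
Proof.
  intros H. destruct (box_eq_shrink _ _ _ _ H) as [e [He H']].
  exists e; split; auto. intros. apply box_eq_dx. apply H'; auto.
Qed.
Lemma box_eq_ddy f g x y : box_eq f g x y -> box_eq (dy f) (dy g) x y.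
Proof.
  intros H. destruct (box_eq_shrink _ _ _ _ H) as [e [He H']].
  exists e; split; auto. intros. apply box_eq_dy. apply H'; auto.
Qed.

Lemma box_eq_cont2 f g x y : box_eq f g x y -> cont2 f x y -> cont2 g x y.
Proof.
  intros [e0 [He0 H]] Hc eps Heps. destruct (Hc eps Heps) as [d [Hd Hd2]].
  exists (Rmin d e0). split; [apply Rmin_pos; auto|].
  intros x' y' H1 H2.
  assert (a1: Rabs (x'-x) < d) by (eapply Rlt_le_trans; [exact H1|apply Rmin_l]).
  assert (a2: Rabs (y'-y) < d) by (eapply Rlt_le_trans; [exact H2|apply Rmin_l]).
  assert (b1: Rabs (x'-x) < e0) by (eapply Rlt_le_trans; [exact H1|apply Rmin_r]).
  assert (b2: Rabs (y'-y) < e0) by (eapply Rlt_le_trans; [exact H2|apply Rmin_r]).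
  rewrite <- (H x' y') by auto. rewrite <- (H x y) by (rewrite Rminus_diag, Rabs_R0; lra).
  apply Hd2; auto.
Qed.

Definition C2pt (g : R -> R -> R) (x y : R) : Prop :=
    exdx g x y /\ exdy g x y /\
    exdx (dx g) x y /\ exdy (dx g) x y /\ exdx (dy g) x y /\ exdy (dy g) x y /\
    cont2 g x y /\ cont2 (dx g) x y /\ cont2 (dy g) x y /\
    cont2 (dx (dx g)) x y /\ cont2 (dy (dx g)) x y /\
    cont2 (dx (dy g)) x y /\ cont2 (dy (dy g)) x y.

Lemma C2_pt g U x y : C2 g U -> U x y -> C2pt g x y.
Proof. intros H Hu. exact (H x y Hu). Qed.

Lemma box_eq_C2pt f g x y : box_eq f g x y -> C2pt f x y -> C2pt g x y.
Proof.
  intros H (h1&h2&h3&h4&h5&h6&h7&h8&h9&h10&h11&h12&h13).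
  pose proof (box_eq_ddx _ _ _ _ H) as Hx. pose proof (box_eq_ddy _ _ _ _ H) as Hy.
  pose proof (box_eq_ddx _ _ _ _ Hx) as Hxx. pose proof (box_eq_ddy _ _ _ _ Hx) as Hyx.
  pose proof (box_eq_ddx _ _ _ _ Hy) as Hxy. pose proof (box_eq_ddy _ _ _ _ Hy) as Hyy.
  repeat split.
  - apply (box_eq_dx _ _ _ _ H); auto.
  - apply (box_eq_dy _ _ _ _ H); auto.
  - apply (box_eq_dx _ _ _ _ Hx); auto.
  - apply (box_eq_dy _ _ _ _ Hx); auto.
  - apply (box_eq_dx _ _ _ _ Hy); auto.
  - apply (box_eq_dy _ _ _ _ Hy); auto.
  - apply (box_eq_cont2 _ _ _ _ H); auto.
  - apply (box_eq_cont2 _ _ _ _ Hx); auto.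
  - apply (box_eq_cont2 _ _ _ _ Hy); auto.
  - apply (box_eq_cont2 _ _ _ _ Hxx); auto.
  - apply (box_eq_cont2 _ _ _ _ Hyx); auto.
  - apply (box_eq_cont2 _ _ _ _ Hxy); auto.
  - apply (box_eq_cont2 _ _ _ _ Hyy); auto.
Qed.

Definition glue (h k : R -> R -> R) : R -> R -> R :=
  fun x y => if Rle_dec 0 y then h x y else k x (- y).

Lemma dx_glue h k : dx (glue h k) = glue (dx h) (dx k).
Proof.
  apply functional_extensionality; intro x; apply functional_extensionality; intro y.
  unfold dx, glue. destruct (Rle_dec 0 y); reflexivity.
Qed.

Lemma exdx_glue h k x y : (0 <= y -> exdx h x y) -> (y < 0 -> exdx k x (-y)) -> exdx (glue h k) x y.
Proof.
  intros H1 H2. unfold exdx, glue. destruct (Rle_dec 0 y).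
  - apply H1; auto.
  - apply H2; lra.
Qed.

Lemma glue_pos h k x y : 0 <= y -> glue h k x y = h x y.
Proof. intros. unfold glue. destruct (Rle_dec 0 y); [reflexivity|lra]. Qed.
Lemma glue_neg h k x y : y < 0 -> glue h k x y = k x (-y).
Proof. intros. unfold glue. destruct (Rle_dec 0 y); [lra|reflexivity]. Qed.

Lemma box_pos h k x y : 0 < y -> box_eq h (glue h k) x y.
Proof.
  intros Hy. exists y; split; auto. intros x' y' _ H.
  rewrite glue_pos; auto. apply Rabs_def2 in H. lra.
Qed.
Lemma box_neg h k x y : y < 0 -> box_eq (fun x y => k x (-y)) (glue h k) x y.
Proof.
  intros Hy. exists (-y); split; [lra|]. intros x' y' _ H.
  rewrite glue_neg; auto. apply Rabs_def2 in H. lra.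
Qed.

Lemma dy_fl k x y : exdy k x (-y) -> is_derive (fun t => k x (- t)) y (- dy k x (-y)).
Proof.
  intros H. apply Derive_correct in H.
  pose proof (is_derive_comp (fun t => k x t) Ropp y _ (-1) H (isd_opp _ _ _ (is_derive_id y))) as Hc.
  replace (- dy k x (-y)) with (scal (-1) (Derive (fun t => k x t) (-y))).
  exact Hc. unfold scal; simpl; unfold mult; simpl; unfold dy; ring.
Qed.

Lemma cont2_fl k x y : cont2 k x (-y) -> cont2 (fun x y => k x (-y)) x y.
Proof.
  intros H eps He. destruct (H eps He) as [d [Hd H2]]. exists d; split; auto.
  intros x' y' h1 h2. apply H2; auto. replace (- y' - - y) with (- (y' - y)) by ring.
  rewrite Rabs_Ropp; auto.
Qed.

Definition dyglue_hyp (h k : R -> R -> R) x y :=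
  (0 < y -> exdy h x y) /\ (y < 0 -> exdy k x (-y)) /\
  (y = 0 -> exdy h x 0 /\ exdy k x 0 /\ h x 0 = k x 0 /\ dy k x 0 = - dy h x 0).

Lemma dy_glue_at h k x y : dyglue_hyp h k x y ->
  is_derive (fun t => glue h k x t) y (glue (dy h) (fun x y => - dy k x y) x y).
Proof.
  intros (H1 & H2 & H3).
  destruct (Rtotal_order 0 y) as [Hp|[H0|Hn]].
  - rewrite glue_pos by lra. destruct (box_pos h k x y Hp) as [e [He Hb]].
    apply (is_derive_ext_loc (fun t => h x t)).
    + apply (loc_of _ _ e He). intros t Ht. apply Hb; auto. rewrite Rminus_diag, Rabs_R0; lra.
    + apply Derive_correct. apply H1; auto.
  - subst y. rewrite glue_pos by lra. destruct (H3 eq_refl) as (a1&a2&a3&a4).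
    apply (pw_derive (fun t => h x t) (fun t => k x t)).
    + apply Derive_correct; auto.
    + apply Derive_correct in a2. rewrite <- a4. exact a2.
    + exact a3.
  - rewrite glue_neg by lra. destruct (box_neg h k x y Hn) as [e [He Hb]].
    apply (is_derive_ext_loc (fun t => k x (- t))).
    + apply (loc_of _ _ e He). intros t Ht. apply Hb; auto. rewrite Rminus_diag, Rabs_R0; lra.
    + cbv beta. apply dy_fl. apply H2; auto.
Qed.

Lemma dy_glue_ex h k x y : dyglue_hyp h k x y -> exdy (glue h k) x y.
Proof. intros H. eexists. apply (dy_glue_at h k x y H). Qed.
Lemma dy_glue_eq h k x y : dyglue_hyp h k x y ->
  dy (glue h k) x y = glue (dy h) (fun x y => - dy k x y) x y.
Proof. intros H. unfold dy at 1. apply is_derive_unique. apply (dy_glue_at h k x y H). Qed.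

Definition cglue_hyp (h k : R -> R -> R) x y :=
  (0 < y -> cont2 h x y) /\ (y < 0 -> cont2 k x (-y)) /\
  (y = 0 -> cont2 h x 0 /\ cont2 k x 0 /\ h x 0 = k x 0).

Lemma cont2_glue h k x y : cglue_hyp h k x y -> cont2 (glue h k) x y.
Proof.
  intros (H1 & H2 & H3).
  destruct (Rtotal_order 0 y) as [Hp|[H0|Hn]].
  - apply (box_eq_cont2 _ _ _ _ (box_pos h k x y Hp)); auto.
  - subst y. destruct (H3 eq_refl) as (a1&a2&a3).
    intros eps He. destruct (a1 eps He) as [d1 [Hd1 D1]]. destruct (a2 eps He) as [d2 [Hd2 D2]].
    exists (Rmin d1 d2); split; [apply Rmin_pos; auto|]. intros x' y' h1 h2.
    assert (l1 : Rabs (x'-x) < d1) by (eapply Rlt_le_trans; [exact h1|apply Rmin_l]).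
    assert (l2 : Rabs (y'-0) < d1) by (eapply Rlt_le_trans; [exact h2|apply Rmin_l]).
    assert (m1 : Rabs (x'-x) < d2) by (eapply Rlt_le_trans; [exact h1|apply Rmin_r]).
    assert (m2 : Rabs (y'-0) < d2) by (eapply Rlt_le_trans; [exact h2|apply Rmin_r]).
    rewrite (glue_pos h k x 0) by lra. unfold glue. destruct (Rle_dec 0 y').
    + apply D1; auto.
    + rewrite a3. apply D2; auto. replace (- y' - 0) with (- (y' - 0)) by ring. rewrite Rabs_Ropp; auto.
  - apply (box_eq_cont2 _ _ _ _ (box_neg h k x y Hn)). apply cont2_fl; apply H2; auto.
Qed.

Lemma C2_exdx g x y : C2pt g x y -> exdx g x y. Proof. intros H; apply H. Qed.
Lemma C2_exdy g x y : C2pt g x y -> exdy g x y. Proof. intros H; apply H. Qed.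
Lemma C2_exdxdx g x y : C2pt g x y -> exdx (dx g) x y. Proof. intros H; apply H. Qed.
Lemma C2_exdydx g x y : C2pt g x y -> exdy (dx g) x y. Proof. intros H; apply H. Qed.
Lemma C2_exdxdy g x y : C2pt g x y -> exdx (dy g) x y. Proof. intros H; apply H. Qed.
Lemma C2_exdydy g x y : C2pt g x y -> exdy (dy g) x y. Proof. intros H; apply H. Qed.
Lemma C2_c g x y : C2pt g x y -> cont2 g x y. Proof. intros H; apply H. Qed.
Lemma C2_cx g x y : C2pt g x y -> cont2 (dx g) x y. Proof. intros H; apply H. Qed.
Lemma C2_cy g x y : C2pt g x y -> cont2 (dy g) x y. Proof. intros H; apply H. Qed.
Lemma C2_cxx g x y : C2pt g x y -> cont2 (dx (dx g)) x y. Proof. intros H; apply H. Qed.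
Lemma C2_cyx g x y : C2pt g x y -> cont2 (dy (dx g)) x y. Proof. intros H; apply H. Qed.
Lemma C2_cxy g x y : C2pt g x y -> cont2 (dx (dy g)) x y. Proof. intros H; apply H. Qed.
Lemma C2_cyy g x y : C2pt g x y -> cont2 (dy (dy g)) x y. Proof. intros H; apply H. Qed.

Ltac csplit := repeat match goal with |- _ /\ _ => split end.

Lemma dx_opp f : dx (fun x y => - f x y) = fun x y => - dx f x y.
Proof. apply functional_extensionality; intro x; apply functional_extensionality; intro y.
  unfold dx. apply Derive_opp. Qed.
Lemma dy_opp f : dy (fun x y => - f x y) = fun x y => - dy f x y.
Proof. apply functional_extensionality; intro x; apply functional_extensionality; intro y.
  unfold dy. apply Derive_opp. Qed.
Lemma exdx_opp f x y : exdx f x y -> exdx (fun x y => - f x y) x y.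
Proof. intros H. exact (ex_derive_opp _ _ H). Qed.
Lemma exdy_opp f x y : exdy f x y -> exdy (fun x y => - f x y) x y.
Proof. intros H. exact (ex_derive_opp _ _ H). Qed.
Lemma cont2_opp f x y : cont2 f x y -> cont2 (fun x y => - f x y) x y.
Proof. intros H eps He. destruct (H eps He) as [d [Hd H2]]. exists d; split; auto.
  intros. replace (- f x' y' - - f x y) with (- (f x' y' - f x y)) by ring.
  rewrite Rabs_Ropp. auto. Qed.

Definition axis_hyp (h k : R -> R -> R) x := k x 0 = h x 0 /\ dy k x 0 = - dy h x 0 /\
  dx k x 0 = dx h x 0 /\ dx (dx k) x 0 = dx (dx h) x 0 /\
  dx (dy k) x 0 = - dx (dy h) x 0 /\ dy (dx k) x 0 = - dy (dx h) x 0 /\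
  dy (dy k) x 0 = dy (dy h) x 0.

Lemma glue_main (O U : R -> R -> Prop) h k : open2 O -> (forall x y, O x y -> O x (-y)) ->
  (forall x y, O x y -> 0 <= y -> U x y) -> C2 h U -> C2 k U ->
  (forall x, O x 0 -> axis_hyp h k x) ->
  C2 (glue h k) O /\
  (forall x y, O x y -> 0 <= y -> dy (glue h k) x y = dy h x y /\ dy (dy (glue h k)) x y = dy (dy h) x y) /\
  (forall x y, O x y -> y < 0 -> dy (glue h k) x y = - dy k x (-y) /\ dy (dy (glue h k)) x y = dy (dy k) x (-y)).
Proof.
  intros HO Hsym HOU Ch Ck Hax.
  assert (HU : forall x y, O x y -> 0 <= y -> C2pt h x y) by (intros; apply (C2_pt h U); auto).
  assert (HK : forall x y, O x y -> y < 0 -> C2pt k x (-y)).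
  { intros. apply (C2_pt k U); auto. apply HOU; [apply Hsym; auto|lra]. }
  assert (HK0 : forall x, O x 0 -> C2pt k x 0).
  { intros. apply (C2_pt k U); auto. apply HOU; auto; lra. }
  assert (HU0 : forall x, O x 0 -> C2pt h x 0).
  { intros. apply HU; auto; lra. }
  assert (HUp : forall x y, O x y -> 0 < y -> C2pt h x y).
  { intros. apply HU; auto; lra. }
  set (G := glue h k).
  set (G2 := glue (dy h) (fun x y => - dy k x y)).
  assert (F1 : forall x y, O x y -> dyglue_hyp h k x y).
  { intros x y Oxy. unfold dyglue_hyp. split; [|split]; intros Hy.
    - apply C2_exdy; auto.
    - apply C2_exdy; auto.
    - subst. destruct (Hax x Oxy) as (a1&a2&_).
      split; [|split; [|split]]; [apply C2_exdy; auto|apply C2_exdy; auto|symmetry; exact a1|exact a2]. }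
  assert (E2 : forall x y, O x y -> dy G x y = G2 x y) by (intros; apply dy_glue_eq; auto).
  assert (F3 : forall x y, O x y -> dyglue_hyp (dx h) (dx k) x y).
  { intros x y Oxy. unfold dyglue_hyp. split; [|split]; intros Hy.
    - apply C2_exdydx; auto.
    - apply C2_exdydx; auto.
    - subst. destruct (Hax x Oxy) as (a1&a2&a3&a4&a5&a6&a7).
      split; [|split; [|split]]; [apply C2_exdydx; auto|apply C2_exdydx; auto|symmetry; exact a3|exact a6]. }
  assert (E4 : forall x y, O x y -> dy (dx G) x y = glue (dy (dx h)) (fun x y => - dy (dx k) x y) x y)
    by (intros; unfold G; rewrite dx_glue; apply dy_glue_eq; auto).
  assert (F5 : forall x y, O x y -> dyglue_hyp (dy h) (fun x y => - dy k x y) x y).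
  { intros x y Oxy. unfold dyglue_hyp. split; [|split]; intros Hy.
    - apply C2_exdydy; auto.
    - apply exdy_opp. apply C2_exdydy; auto.
    - subst. destruct (Hax x Oxy) as (a1&a2&a3&a4&a5&a6&a7).
      split; [|split; [|split]]; [apply C2_exdydy; auto|apply exdy_opp; apply C2_exdydy; auto| |].
      + lra.
      + rewrite dy_opp. lra. }
  set (G3 := glue (dy (dy h)) (fun x y => - dy (fun x y => - dy k x y) x y)).
  assert (E6 : forall x y, O x y -> dy G2 x y = G3 x y) by (intros; apply dy_glue_eq; auto).
  assert (B2 : forall x y, O x y -> box_eq G2 (dy G) x y)
    by (intros; apply (box_eq_open O); auto; intros; symmetry; apply E2; auto).
  assert (B6 : forall x y, O x y -> box_eq G3 (dy (dy G)) x y).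
  { intros x y Oxy. pose proof (box_eq_ddy _ _ _ _ (B2 x y Oxy)) as Hb.
    destruct Hb as [e [He Hb]]. destruct (HO x y Oxy) as [e' [He' Ho]].
    exists (Rmin e e'). split; [apply Rmin_pos; auto|]. intros x' y' h1 h2.
    rewrite <- Hb by (eapply Rlt_le_trans; [eassumption|apply Rmin_l]).
    symmetry; apply E6. apply Ho; (eapply Rlt_le_trans; [eassumption|apply Rmin_r]). }
  split; [|split].
  - intros x y Oxy.
    split; [|split; [|split; [|split; [|split; [|split; [|split; [|split; [|split; [|split; [|split; [|split]]]]]]]]]]].
    + apply exdx_glue; intros; [apply C2_exdx|apply C2_exdx]; auto.
    + apply dy_glue_ex; auto.
    + unfold G; rewrite dx_glue. apply exdx_glue; intros; [apply C2_exdxdx|apply C2_exdxdx]; auto.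
    + unfold G; rewrite dx_glue. apply dy_glue_ex; auto.
    + apply (box_eq_dx _ _ _ _ (B2 x y Oxy)). unfold G2.
      apply exdx_glue; intros; [apply C2_exdxdy; auto|apply exdx_opp; apply C2_exdxdy; auto].
    + apply (box_eq_dy _ _ _ _ (B2 x y Oxy)). apply dy_glue_ex; auto.
    + apply cont2_glue. unfold cglue_hyp. split; [|split]; intros Hy;
        [apply C2_c; auto|apply C2_c; auto|subst].
      destruct (Hax x Oxy) as (a1&_). split; [apply C2_c|split; [apply C2_c|symmetry; exact a1]]; auto.
    + unfold G; rewrite dx_glue. apply cont2_glue. unfold cglue_hyp. split; [|split]; intros Hy;
        [apply C2_cx; auto|apply C2_cx; auto|subst].
      destruct (Hax x Oxy) as (a1&a2&a3&_). split; [apply C2_cx|split; [apply C2_cx|symmetry; exact a3]]; auto.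
    + apply (box_eq_cont2 _ _ _ _ (B2 x y Oxy)). apply cont2_glue. unfold cglue_hyp.
      split; [|split]; intros Hy;
        [apply C2_cy; auto|apply cont2_opp; apply C2_cy; auto|subst].
      destruct (Hax x Oxy) as (a1&a2&a3&_).
      split; [apply C2_cy|split; [apply cont2_opp; apply C2_cy|lra]]; auto.
    + unfold G; rewrite !dx_glue. apply cont2_glue. unfold cglue_hyp. split; [|split]; intros Hy;
        [apply C2_cxx; auto|apply C2_cxx; auto|subst].
      destruct (Hax x Oxy) as (a1&a2&a3&a4&_). split; [apply C2_cxx|split; [apply C2_cxx|symmetry; exact a4]]; auto.
    + assert (Hb : box_eq (glue (dy (dx h)) (fun x y => - dy (dx k) x y)) (dy (dx G)) x y)
        by (apply (box_eq_open O); auto; intros; symmetry; apply E4; auto).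
      apply (box_eq_cont2 _ _ _ _ Hb). apply cont2_glue. unfold cglue_hyp.
      split; [|split]; intros Hy;
        [apply C2_cyx; auto|apply cont2_opp; apply C2_cyx; auto|subst].
      destruct (Hax x Oxy) as (a1&a2&a3&a4&a5&a6&a7).
      split; [apply C2_cyx|split; [apply cont2_opp; apply C2_cyx|lra]]; auto.
    + pose proof (box_eq_ddx _ _ _ _ (B2 x y Oxy)) as Hb.
      apply (box_eq_cont2 _ _ _ _ Hb). unfold G2. rewrite dx_glue, dx_opp. apply cont2_glue.
      unfold cglue_hyp.
      split; [|split]; intros Hy;
        [apply C2_cxy; auto|apply cont2_opp; apply C2_cxy; auto|subst].
      destruct (Hax x Oxy) as (a1&a2&a3&a4&a5&a6&a7).
      split; [apply C2_cxy|split; [apply cont2_opp; apply C2_cxy|lra]]; auto.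
    + apply (box_eq_cont2 _ _ _ _ (B6 x y Oxy)). unfold G3. rewrite !dy_opp. apply cont2_glue.
      unfold cglue_hyp.
      split; [|split]; intros Hy;
        [apply C2_cyy; auto|apply cont2_opp; apply cont2_opp; apply C2_cyy; auto|subst].
      destruct (Hax x Oxy) as (a1&a2&a3&a4&a5&a6&a7).
      split; [apply C2_cyy|split; [apply cont2_opp; apply cont2_opp; apply C2_cyy|lra]]; auto.
  - intros x y Oxy Hy. split.
    + rewrite E2 by auto. unfold G2. apply glue_pos; auto.
    + rewrite <- (proj1 (box_eq_dy _ _ _ _ (B2 x y Oxy))). rewrite E6 by auto.
      unfold G3. apply glue_pos; auto.
  - intros x y Oxy Hy. split.
    + rewrite E2 by auto. unfold G2. apply glue_neg; auto.
    + rewrite <- (proj1 (box_eq_dy _ _ _ _ (B2 x y Oxy))). rewrite E6 by auto.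
      unfold G3. rewrite glue_neg by auto. rewrite dy_opp. ring.
Qed.

Definition linv (m v : V4) : R := c0 m * c0 v + c1 m * c1 v + c2 m * c2 v + c3 m * c3 v.
Definition lin (m : V4) (f : R -> R -> V4) : R -> R -> R := fun x y => linv m (f x y).

Definition exdxV f x y := exdx (cmp0 f) x y /\ exdx (cmp1 f) x y /\ exdx (cmp2 f) x y /\ exdx (cmp3 f) x y.
Definition exdyV f x y := exdy (cmp0 f) x y /\ exdy (cmp1 f) x y /\ exdy (cmp2 f) x y /\ exdy (cmp3 f) x y.
Definition cont2V f x y := cont2 (cmp0 f) x y /\ cont2 (cmp1 f) x y /\ cont2 (cmp2 f) x y /\ cont2 (cmp3 f) x y.

Lemma dx_lin_at m f x y : exdxV f x y -> is_derive (fun t => lin m f t y) x (linv m (DX f x y)).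
Proof.
  intros (h0&h1&h2&h3). unfold lin, linv.
  apply Derive_correct in h0, h1, h2, h3.
  apply isd_plus; [apply isd_plus; [apply isd_plus|]|]; apply isd_scal; assumption.
Qed.
Lemma dy_lin_at m f x y : exdyV f x y -> is_derive (fun t => lin m f x t) y (linv m (DY f x y)).
Proof.
  intros (h0&h1&h2&h3). unfold lin, linv.
  apply Derive_correct in h0, h1, h2, h3.
  apply isd_plus; [apply isd_plus; [apply isd_plus|]|]; apply isd_scal; assumption.
Qed.

Lemma cont2_plus f g x y : cont2 f x y -> cont2 g x y -> cont2 (fun x y => f x y + g x y) x y.
Proof.
  intros Hf Hg eps He.
  destruct (Hf (eps/2)) as [d1 [Hd1 D1]]; [lra|]. destruct (Hg (eps/2)) as [d2 [Hd2 D2]]; [lra|].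
  exists (Rmin d1 d2). split; [apply Rmin_pos; auto|]. intros x' y' h1 h2.
  assert (l1 : Rabs (x'-x) < d1) by (eapply Rlt_le_trans; [exact h1|apply Rmin_l]).
  assert (l2 : Rabs (y'-y) < d1) by (eapply Rlt_le_trans; [exact h2|apply Rmin_l]).
  assert (m1 : Rabs (x'-x) < d2) by (eapply Rlt_le_trans; [exact h1|apply Rmin_r]).
  assert (m2 : Rabs (y'-y) < d2) by (eapply Rlt_le_trans; [exact h2|apply Rmin_r]).
  specialize (D1 x' y' l1 l2). specialize (D2 x' y' m1 m2).
  replace (f x' y' + g x' y' - (f x y + g x y)) with ((f x' y' - f x y) + (g x' y' - g x y)) by ring.
  eapply Rle_lt_trans; [apply Rabs_triang|lra].
Qed.
Lemma cont2_scal k f x y : cont2 f x y -> cont2 (fun x y => k * f x y) x y.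
Proof.
  intros Hf eps He.
  assert (Hk : 0 < Rabs k + 1) by (pose proof (Rabs_pos k); lra).
  destruct (Hf (eps / (Rabs k + 1))) as [d [Hd D]]; [apply Rdiv_lt_0_compat; lra|].
  exists d; split; auto. intros x' y' h1 h2. specialize (D x' y' h1 h2).
  replace (k * f x' y' - k * f x y) with (k * (f x' y' - f x y)) by ring.
  rewrite Rabs_mult.
  apply Rle_lt_trans with ((Rabs k + 1) * Rabs (f x' y' - f x y)).
  - apply Rmult_le_compat_r; [apply Rabs_pos|lra].
  - apply Rmult_lt_compat_l with (r := Rabs k + 1) in D; auto.
    replace ((Rabs k + 1) * (eps / (Rabs k + 1))) with eps in D by (field; lra). exact D.
Qed.

Lemma cont2_lin m f x y : cont2V f x y -> cont2 (lin m f) x y.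
Proof.
  intros (h0&h1&h2&h3). unfold lin, linv.
  apply (cont2_plus (fun x y => c0 m * c0 (f x y) + c1 m * c1 (f x y) + c2 m * c2 (f x y))
                    (fun x y => c3 m * c3 (f x y))).
  apply (cont2_plus (fun x y => c0 m * c0 (f x y) + c1 m * c1 (f x y))
                    (fun x y => c2 m * c2 (f x y))).
  apply (cont2_plus (fun x y => c0 m * c0 (f x y)) (fun x y => c1 m * c1 (f x y))).
  all: apply (cont2_scal _ (fun x y => _ (f x y))); assumption.
Qed.

Lemma box_eq_trans f g h x y : box_eq f g x y -> box_eq g h x y -> box_eq f h x y.
Proof.
  intros [e1 [He1 H1]] [e2 [He2 H2]]. exists (Rmin e1 e2); split; [apply Rmin_pos; auto|].
  intros x' y' a b. rewrite H1, H2; auto;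
  (eapply Rlt_le_trans; [eassumption|first [apply Rmin_l|apply Rmin_r]]).
Qed.

Definition DXX f x y := DX (DX f) x y.
Definition C2Vpt f x y := C2pt (cmp0 f) x y /\ C2pt (cmp1 f) x y /\ C2pt (cmp2 f) x y /\ C2pt (cmp3 f) x y.

Lemma C2V_pt f U x y : C2V f U -> U x y -> C2Vpt f x y.
Proof. intros (a&b&c&d) H. unfold exdxV, exdyV, cont2V, C2Vpt; csplit; [apply a|apply b|apply c|apply d]; auto. Qed.

Lemma bx_lin m f (U : R -> R -> Prop) x y : open2 U -> U x y -> (forall x y, U x y -> exdxV f x y) ->
  box_eq (lin m (DX f)) (dx (lin m f)) x y.
Proof.
  intros HU Hu H. apply (box_eq_open U); auto. intros x' y' Hu'.
  symmetry. unfold dx at 1. apply is_derive_unique. apply dx_lin_at; auto.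
Qed.
Lemma by_lin m f (U : R -> R -> Prop) x y : open2 U -> U x y -> (forall x y, U x y -> exdyV f x y) ->
  box_eq (lin m (DY f)) (dy (lin m f)) x y.
Proof.
  intros HU Hu H. apply (box_eq_open U); auto. intros x' y' Hu'.
  symmetry. unfold dy at 1. apply is_derive_unique. apply dy_lin_at; auto.
Qed.

Lemma C2_lin m f U : open2 U -> C2V f U -> C2 (lin m f) U.
Proof.
  intros HU HC x y Hu.
  assert (P : forall x y, U x y -> C2Vpt f x y) by (intros; apply (C2V_pt f U); auto).
  assert (EX : forall x y, U x y -> exdxV f x y)
    by (intros x0 y0 H0; destruct (P x0 y0 H0) as (a&b&c&d); unfold exdxV, exdyV, cont2V, C2Vpt; csplit; apply C2_exdx; auto).
  assert (EY : forall x y, U x y -> exdyV f x y)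
    by (intros x0 y0 H0; destruct (P x0 y0 H0) as (a&b&c&d); unfold exdxV, exdyV, cont2V, C2Vpt; csplit; apply C2_exdy; auto).
  assert (EXX : forall x y, U x y -> exdxV (DX f) x y)
    by (intros x0 y0 H0; destruct (P x0 y0 H0) as (a&b&c&d); unfold exdxV, exdyV, cont2V, C2Vpt; csplit; apply C2_exdxdx; auto).
  assert (EYX : forall x y, U x y -> exdyV (DX f) x y)
    by (intros x0 y0 H0; destruct (P x0 y0 H0) as (a&b&c&d); unfold exdxV, exdyV, cont2V, C2Vpt; csplit; apply C2_exdydx; auto).
  assert (EXY : forall x y, U x y -> exdxV (DY f) x y)
    by (intros x0 y0 H0; destruct (P x0 y0 H0) as (a&b&c&d); unfold exdxV, exdyV, cont2V, C2Vpt; csplit; apply C2_exdxdy; auto).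
  assert (EYY : forall x y, U x y -> exdyV (DY f) x y)
    by (intros x0 y0 H0; destruct (P x0 y0 H0) as (a&b&c&d); unfold exdxV, exdyV, cont2V, C2Vpt; csplit; apply C2_exdydy; auto).
  destruct (P x y Hu) as (p0&p1&p2&p3).
  pose proof (bx_lin m f U x y HU Hu EX) as BX.
  pose proof (by_lin m f U x y HU Hu EY) as BY.
  split; [|split; [|split; [|split; [|split; [|split; [|split; [|split; [|split; [|split; [|split; [|split]]]]]]]]]]].
  - eexists; apply dx_lin_at; auto.
  - eexists; apply dy_lin_at; auto.
  - apply (box_eq_dx _ _ _ _ BX). eexists; apply dx_lin_at; auto.
  - apply (box_eq_dy _ _ _ _ BX). eexists; apply dy_lin_at; auto.
  - apply (box_eq_dx _ _ _ _ BY). eexists; apply dx_lin_at; auto.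
  - apply (box_eq_dy _ _ _ _ BY). eexists; apply dy_lin_at; auto.
  - apply cont2_lin. unfold exdxV, exdyV, cont2V, C2Vpt; csplit; apply C2_c; auto.
  - apply (box_eq_cont2 _ _ _ _ BX). apply cont2_lin. unfold exdxV, exdyV, cont2V, C2Vpt; csplit; apply C2_cx; auto.
  - apply (box_eq_cont2 _ _ _ _ BY). apply cont2_lin. unfold exdxV, exdyV, cont2V, C2Vpt; csplit; apply C2_cy; auto.
  - apply (box_eq_cont2 _ _ _ _ (box_eq_trans _ _ _ _ _ (bx_lin m (DX f) U x y HU Hu EXX) (box_eq_ddx _ _ _ _ BX))).
    apply cont2_lin. unfold exdxV, exdyV, cont2V, C2Vpt; csplit; apply C2_cxx; auto.
  - apply (box_eq_cont2 _ _ _ _ (box_eq_trans _ _ _ _ _ (by_lin m (DX f) U x y HU Hu EYX) (box_eq_ddy _ _ _ _ BX))).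
    apply cont2_lin. unfold exdxV, exdyV, cont2V, C2Vpt; csplit; apply C2_cyx; auto.
  - apply (box_eq_cont2 _ _ _ _ (box_eq_trans _ _ _ _ _ (bx_lin m (DY f) U x y HU Hu EXY) (box_eq_ddx _ _ _ _ BY))).
    apply cont2_lin. unfold exdxV, exdyV, cont2V, C2Vpt; csplit; apply C2_cxy; auto.
  - apply (box_eq_cont2 _ _ _ _ (box_eq_trans _ _ _ _ _ (by_lin m (DY f) U x y HU Hu EYY) (box_eq_ddy _ _ _ _ BY))).
    apply cont2_lin. unfold exdxV, exdyV, cont2V, C2Vpt; csplit; apply C2_cyy; auto.
Qed.

Definition D4 (u : R -> V4) t (u' : V4) :=
  is_derive (fun s => c0 (u s)) t (c0 u') /\ is_derive (fun s => c1 (u s)) t (c1 u') /\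
  is_derive (fun s => c2 (u s)) t (c2 u') /\ is_derive (fun s => c3 (u s)) t (c3 u').

Lemma isd_ext (f g : R -> R) (x l l' : R) : (forall t, f t = g t) -> l = l' -> is_derive f x l -> is_derive g x l'.
Proof. intros H1 H2 H3. subst l'. exact (is_derive_ext f g x l H1 H3). Qed.

Lemma D4_lor u v t u' v' : D4 u t u' -> D4 v t v' ->
  is_derive (fun s => lor (u s) (v s)) t (lor u' (v t) + lor (u t) v').
Proof.
  intros (a0&a1&a2&a3) (b0&b1&b2&b3).
  assert (K : is_derive (fun s => (-1) * (c0 (u s) * c0 (v s)) + c1 (u s) * c1 (v s) + c2 (u s) * c2 (v s) + c3 (u s) * c3 (v s)) t
     ((-1) * (c0 u' * c0 (v t) + c0 (u t) * c0 v') + (c1 u' * c1 (v t) + c1 (u t) * c1 v')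
          + (c2 u' * c2 (v t) + c2 (u t) * c2 v') + (c3 u' * c3 (v t) + c3 (u t) * c3 v'))).
  { apply isd_plus; [apply isd_plus; [apply isd_plus|]|].
    + apply isd_scal. apply (isd_mult (fun s => c0 (u s)) (fun s => c0 (v s))); auto.
    + apply (isd_mult (fun s => c1 (u s)) (fun s => c1 (v s))); auto.
    + apply (isd_mult (fun s => c2 (u s)) (fun s => c2 (v s))); auto.
    + apply (isd_mult (fun s => c3 (u s)) (fun s => c3 (v s))); auto. }
  refine (isd_ext _ _ t _ _ _ _ K).
  - intro s; cbv beta; unfold lor; ring.
  - unfold lor. ring.
Qed.

Lemma D4_const (a : V4) t : D4 (fun _ => a) t (mk4 0 0 0 0).
Proof. split; [|split; [|split]]; simpl; apply isd_const. Qed.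

Lemma D4_lor_c u t u' a : D4 u t u' -> is_derive (fun s => lor (u s) a) t (lor u' a).
Proof.
  intros H. pose proof (D4_lor u (fun _ => a) t u' (mk4 0 0 0 0) H (D4_const a t)) as K.
  eapply isd_ext; [intro; reflexivity| |exact K]. unfold lor; simpl; ring.
Qed.

Lemma D4_N u t u' : D4 u t u' -> D4 (fun s => Nvec (u s)) t (Nvec u').
Proof. intros (a0&a1&a2&a3). split; [|split; [|split]]; simpl; auto. apply isd_const. Qed.

Lemma D4_x f x y : exdxV f x y -> D4 (fun t => f t y) x (DX f x y).
Proof. intros (a0&a1&a2&a3). split; [|split; [|split]]; apply Derive_correct; assumption. Qed.
Lemma D4_y f x y : exdyV f x y -> D4 (fun t => f x t) y (DY f x y).
Proof. intros (a0&a1&a2&a3). split; [|split; [|split]]; apply Derive_correct; assumption. Qed.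

Lemma cont2_2d g x y : cont2 g x y -> continuity_2d_pt g x y.
Proof.
  intros H eps. destruct (H eps (cond_pos eps)) as [d [Hd H2]].
  exists (mkposreal d Hd). intros u v h1 h2. apply H2; auto.
Qed.

Lemma schwarz_C2 g (U : R -> R -> Prop) x y : open2 U -> C2 g U -> U x y -> dx (dy g) x y = dy (dx g) x y.
Proof.
  intros HU HC Hu. unfold dx, dy. apply Schwarz.
  - destruct (HU x y Hu) as [e [He Hb]]. exists (mkposreal e He). intros u v h1 h2.
    pose proof (C2_pt g U u v HC (Hb u v h1 h2)) as P.
    split; [apply (C2_exdx _ _ _ P)|split; [apply (C2_exdy _ _ _ P)|split]].
    + apply (C2_exdxdy _ _ _ P).
    + apply (C2_exdydx _ _ _ P).
  - apply cont2_2d. apply (C2_cxy _ _ _ (C2_pt g U x y HC Hu)).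
  - apply cont2_2d. apply (C2_cyx _ _ _ (C2_pt g U x y HC Hu)).
Qed.
Definition det4 (m00 m01 m02 m03 m10 m11 m12 m13 m20 m21 m22 m23 m30 m31 m32 m33 : R) : R := (0+m00*m11*m22*m33-m00*m11*m23*m32-m00*m12*m21*m33+m00*m12*m23*m31+m00*m13*m21*m32-m00*m13*m22*m31-m01*m10*m22*m33+m01*m10*m23*m32+m01*m12*m20*m33-m01*m12*m23*m30-m01*m13*m20*m32+m01*m13*m22*m30+m02*m10*m21*m33-m02*m10*m23*m31-m02*m11*m20*m33+m02*m11*m23*m30+m02*m13*m20*m31-m02*m13*m21*m30-m03*m10*m21*m32+m03*m10*m22*m31+m03*m11*m20*m32-m03*m11*m22*m30-m03*m12*m20*m31+m03*m12*m21*m30).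
Definition detE (u1 u2 u3 u4 : V4) : R := det4 (c0 u1) (c1 u1) (c2 u1) (c3 u1) (c0 u2) (c1 u2) (c2 u2) (c3 u2) (c0 u3) (c1 u3) (c2 u3) (c3 u3) (c0 u4) (c1 u4) (c2 u4) (c3 u4).
Lemma gram_id (u1 u2 u3 u4 : V4) : det4 (lor u1 u1) (lor u1 u2) (lor u1 u3) (lor u1 u4) (lor u1 u2) (lor u2 u2) (lor u2 u3) (lor u2 u4) (lor u1 u3) (lor u2 u3) (lor u3 u3) (lor u3 u4) (lor u1 u4) (lor u2 u4) (lor u3 u4) (lor u4 u4) = - (detE u1 u2 u3 u4 * detE u1 u2 u3 u4).
Proof. destruct u1 as [p0 p1 p2 p3], u2 as [q0 q1 q2 q3], u3 as [r0 r1 r2 r3], u4 as [s0 s1 s2 s3]. unfold detE, det4, lor; simpl; ring. Qed.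
Lemma adj_id0 (u1 u2 u3 u4 w : V4) : detE u1 u2 u3 u4 * (-1) * c0 w = (1) * (0+(c1 u2)*(c2 u3)*(c3 u4)-(c1 u2)*(c3 u3)*(c2 u4)-(c2 u2)*(c1 u3)*(c3 u4)+(c2 u2)*(c3 u3)*(c1 u4)+(c3 u2)*(c1 u3)*(c2 u4)-(c3 u2)*(c2 u3)*(c1 u4)) * lor u1 w + (-1) * (0+(c1 u1)*(c2 u3)*(c3 u4)-(c1 u1)*(c3 u3)*(c2 u4)-(c2 u1)*(c1 u3)*(c3 u4)+(c2 u1)*(c3 u3)*(c1 u4)+(c3 u1)*(c1 u3)*(c2 u4)-(c3 u1)*(c2 u3)*(c1 u4)) * lor u2 w + (1) * (0+(c1 u1)*(c2 u2)*(c3 u4)-(c1 u1)*(c3 u2)*(c2 u4)-(c2 u1)*(c1 u2)*(c3 u4)+(c2 u1)*(c3 u2)*(c1 u4)+(c3 u1)*(c1 u2)*(c2 u4)-(c3 u1)*(c2 u2)*(c1 u4)) * lor u3 w + (-1) * (0+(c1 u1)*(c2 u2)*(c3 u3)-(c1 u1)*(c3 u2)*(c2 u3)-(c2 u1)*(c1 u2)*(c3 u3)+(c2 u1)*(c3 u2)*(c1 u3)+(c3 u1)*(c1 u2)*(c2 u3)-(c3 u1)*(c2 u2)*(c1 u3)) * lor u4 w.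
Proof. destruct u1 as [p0 p1 p2 p3], u2 as [q0 q1 q2 q3], u3 as [r0 r1 r2 r3], u4 as [s0 s1 s2 s3], w as [t0 t1 t2 t3]. unfold detE, det4, lor; simpl; ring. Qed.
Lemma adj_id1 (u1 u2 u3 u4 w : V4) : detE u1 u2 u3 u4 * 1 * c1 w = (-1) * (0+(c0 u2)*(c2 u3)*(c3 u4)-(c0 u2)*(c3 u3)*(c2 u4)-(c2 u2)*(c0 u3)*(c3 u4)+(c2 u2)*(c3 u3)*(c0 u4)+(c3 u2)*(c0 u3)*(c2 u4)-(c3 u2)*(c2 u3)*(c0 u4)) * lor u1 w + (1) * (0+(c0 u1)*(c2 u3)*(c3 u4)-(c0 u1)*(c3 u3)*(c2 u4)-(c2 u1)*(c0 u3)*(c3 u4)+(c2 u1)*(c3 u3)*(c0 u4)+(c3 u1)*(c0 u3)*(c2 u4)-(c3 u1)*(c2 u3)*(c0 u4)) * lor u2 w + (-1) * (0+(c0 u1)*(c2 u2)*(c3 u4)-(c0 u1)*(c3 u2)*(c2 u4)-(c2 u1)*(c0 u2)*(c3 u4)+(c2 u1)*(c3 u2)*(c0 u4)+(c3 u1)*(c0 u2)*(c2 u4)-(c3 u1)*(c2 u2)*(c0 u4)) * lor u3 w + (1) * (0+(c0 u1)*(c2 u2)*(c3 u3)-(c0 u1)*(c3 u2)*(c2 u3)-(c2 u1)*(c0 u2)*(c3 u3)+(c2 u1)*(c3 u2)*(c0 u3)+(c3 u1)*(c0 u2)*(c2 u3)-(c3 u1)*(c2 u2)*(c0 u3)) *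 lor u4 w.
Proof. destruct u1 as [p0 p1 p2 p3], u2 as [q0 q1 q2 q3], u3 as [r0 r1 r2 r3], u4 as [s0 s1 s2 s3], w as [t0 t1 t2 t3]. unfold detE, det4, lor; simpl; ring. Qed.
Lemma adj_id2 (u1 u2 u3 u4 w : V4) : detE u1 u2 u3 u4 * 1 * c2 w = (1) * (0+(c0 u2)*(c1 u3)*(c3 u4)-(c0 u2)*(c3 u3)*(c1 u4)-(c1 u2)*(c0 u3)*(c3 u4)+(c1 u2)*(c3 u3)*(c0 u4)+(c3 u2)*(c0 u3)*(c1 u4)-(c3 u2)*(c1 u3)*(c0 u4)) * lor u1 w + (-1) * (0+(c0 u1)*(c1 u3)*(c3 u4)-(c0 u1)*(c3 u3)*(c1 u4)-(c1 u1)*(c0 u3)*(c3 u4)+(c1 u1)*(c3 u3)*(c0 u4)+(c3 u1)*(c0 u3)*(c1 u4)-(c3 u1)*(c1 u3)*(c0 u4)) * lor u2 w + (1) * (0+(c0 u1)*(c1 u2)*(c3 u4)-(c0 u1)*(c3 u2)*(c1 u4)-(c1 u1)*(c0 u2)*(c3 u4)+(c1 u1)*(c3 u2)*(c0 u4)+(c3 u1)*(c0 u2)*(c1 u4)-(c3 u1)*(c1 u2)*(c0 u4)) * lor u3 w + (-1) * (0+(c0 u1)*(c1 u2)*(c3 u3)-(c0 u1)*(c3 u2)*(c1 u3)-(c1 u1)*(c0 u2)*(c3 u3)+(c1 u1)*(c3 u2)*(c0 u3)+(c3 u1)*(c0 u2)*(c1 u3)-(c3 u1)*(c1 u2)*(c0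 u3)) * lor u4 w.
Proof. destruct u1 as [p0 p1 p2 p3], u2 as [q0 q1 q2 q3], u3 as [r0 r1 r2 r3], u4 as [s0 s1 s2 s3], w as [t0 t1 t2 t3]. unfold detE, det4, lor; simpl; ring. Qed.
Lemma adj_id3 (u1 u2 u3 u4 w : V4) : detE u1 u2 u3 u4 * 1 * c3 w = (-1) * (0+(c0 u2)*(c1 u3)*(c2 u4)-(c0 u2)*(c2 u3)*(c1 u4)-(c1 u2)*(c0 u3)*(c2 u4)+(c1 u2)*(c2 u3)*(c0 u4)+(c2 u2)*(c0 u3)*(c1 u4)-(c2 u2)*(c1 u3)*(c0 u4)) * lor u1 w + (1) * (0+(c0 u1)*(c1 u3)*(c2 u4)-(c0 u1)*(c2 u3)*(c1 u4)-(c1 u1)*(c0 u3)*(c2 u4)+(c1 u1)*(c2 u3)*(c0 u4)+(c2 u1)*(c0 u3)*(c1 u4)-(c2 u1)*(c1 u3)*(c0 u4)) * lor u2 w + (-1) * (0+(c0 u1)*(c1 u2)*(c2 u4)-(c0 u1)*(c2 u2)*(c1 u4)-(c1 u1)*(c0 u2)*(c2 u4)+(c1 u1)*(c2 u2)*(c0 u4)+(c2 u1)*(c0 u2)*(c1 u4)-(c2 u1)*(c1 u2)*(c0 u4)) * lor u3 w + (1) * (0+(c0 u1)*(c1 u2)*(c2 u3)-(c0 u1)*(c2 u2)*(c1 u3)-(c1 u1)*(c0 u2)*(c2 u3)+(c1 u1)*(c2 u2)*(c0 u3)+(c2 u1)*(c0 u2)*(c1 u3)-(c2 u1)*(c1 u2)*(c0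 u3)) * lor u4 w.
Proof. destruct u1 as [p0 p1 p2 p3], u2 as [q0 q1 q2 q3], u3 as [r0 r1 r2 r3], u4 as [s0 s1 s2 s3], w as [t0 t1 t2 t3]. unfold detE, det4, lor; simpl; ring. Qed.

Lemma frame4 (u1 u2 u3 u4 w : V4) d1 d2 d3 d4 :
  lor u1 u1 = d1 -> lor u2 u2 = d2 -> lor u3 u3 = d3 -> lor u4 u4 = d4 ->
  d1 * d2 * d3 * d4 <> 0 ->
  lor u1 u2 = 0 -> lor u1 u3 = 0 -> lor u1 u4 = 0 -> lor u2 u3 = 0 -> lor u2 u4 = 0 -> lor u3 u4 = 0 ->
  lor u1 w = 0 -> lor u2 w = 0 -> lor u3 w = 0 -> lor u4 w = 0 ->
  c0 w = 0 /\ c1 w = 0 /\ c2 w = 0 /\ c3 w = 0.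
Proof.
  intros h1 h2 h3 h4 hd h12 h13 h14 h23 h24 h34 w1 w2 w3 w4.
  pose proof (gram_id u1 u2 u3 u4) as G.
  rewrite h1, h2, h3, h4, h12, h13, h14, h23, h24, h34 in G.
  assert (Hd : detE u1 u2 u3 u4 <> 0).
  { assert (Hdet : det4 d1 0 0 0 0 d2 0 0 0 0 d3 0 0 0 0 d4 = d1*d2*d3*d4) by (unfold det4; ring).
    intro Hz. apply hd. rewrite <- Hdet, G, Hz. ring. }
  pose proof (adj_id0 u1 u2 u3 u4 w) as A0. pose proof (adj_id1 u1 u2 u3 u4 w) as A1.
  pose proof (adj_id2 u1 u2 u3 u4 w) as A2. pose proof (adj_id3 u1 u2 u3 u4 w) as A3.
  rewrite w1, w2, w3, w4 in A0, A1, A2, A3.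
  repeat rewrite Rmult_0_r in A0, A1, A2, A3. repeat rewrite Rplus_0_r in A0, A1, A2, A3.
  split; [|split; [|split]].
  - assert (E: detE u1 u2 u3 u4 * (c0 w) = - (detE u1 u2 u3 u4 * (-1) * c0 w)) by ring.
    rewrite A0, Ropp_0 in E. apply Rmult_integral in E; destruct E; [contradiction|auto].
  - assert (E: detE u1 u2 u3 u4 * (c1 w) = (detE u1 u2 u3 u4 * 1 * c1 w)) by ring.
    rewrite A1 in E. apply Rmult_integral in E; destruct E; [contradiction|auto].
  - assert (E: detE u1 u2 u3 u4 * (c2 w) = (detE u1 u2 u3 u4 * 1 * c2 w)) by ring.
    rewrite A2 in E. apply Rmult_integral in E; destruct E; [contradiction|auto].
  - assert (E: detE u1 u2 u3 u4 * (c3 w) = (detE u1 u2 u3 u4 * 1 * c3 w)) by ring.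
    rewrite A3 in E. apply Rmult_integral in E; destruct E; [contradiction|auto].
Qed.

Lemma lor_sym u v : lor u v = lor v u.
Proof. unfold lor; ring. Qed.
Lemma lor_Nvec_a p a : c3 a = 0 -> lor (Nvec p) a = lor p a.
Proof. intros H. unfold lor, Nvec; simpl. rewrite H. ring. Qed.
Lemma lor_NN_l u v : lor (Nvec u) (Nvec v) = lor u (Nvec v).
Proof. unfold lor, Nvec; simpl. ring. Qed.
Lemma lor_NN p : lor (Nvec p) (Nvec p) = - c0 p ^ 2 + c1 p ^ 2 + c2 p ^ 2.
Proof. unfold lor, Nvec; simpl. ring. Qed.
Lemma lor_vadd_l u v w : lor (vadd u v) w = lor u w + lor v w.
Proof. unfold lor, vadd; simpl. ring. Qed.
Lemma lor_vadd_r u v w : lor u (vadd v w) = lor u v + lor u w.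
Proof. unfold lor, vadd; simpl. ring. Qed.
Lemma lor_scal_r u k v : lor u (vscal k v) = k * lor u v.
Proof. unfold lor, vscal; simpl. ring. Qed.
Lemma lor_scal_l u k v : lor (vscal k u) v = k * lor u v.
Proof. unfold lor, vscal; simpl. ring. Qed.
Lemma V4_ext u v : c0 u = c0 v -> c1 u = c1 v -> c2 u = c2 v -> c3 u = c3 v -> u = v.
Proof. destruct u, v; simpl; intros; subst; reflexivity. Qed.
Lemma LapV_split f x y : LapV f x y = vadd (DX (DX f) x y) (DY (DY f) x y).
Proof. reflexivity. Qed.

Lemma axis_geo (Omega U : R -> R -> Prop) (a : V4) (psi : R -> R -> V4) x0 :
  open2 Omega -> open2 U -> (forall x y, Omega x y -> 0 <= y -> U x y) -> C2V psi U ->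
  (forall x y, Omega x y -> 0 <= y -> conformal_immersion_at psi x y) ->
  (exists n, unit_normal psi x0 0 n) ->
  (forall x, Omega x 0 -> in_plane a (psi x 0)) ->
  (forall n, unit_normal psi x0 0 n -> lor n a = 0) ->
  vertical_plane a -> Omega x0 0 ->
  DY psi x0 0 = vscal (lor (DY psi x0 0) a) a /\ lor (DY (DY psi) x0 0) a = 0.
Proof.
  intros HO HUo HOU HC Hconf [n Hn] Hpl Hna [Ha3 Haa] Hx0.
  assert (P : forall x y, Omega x y -> 0 <= y -> C2Vpt psi x y) by (intros; apply (C2V_pt psi U); auto).
  assert (exX : forall x y, Omega x y -> 0 <= y -> exdxV psi x y).
  { intros x y H1 H2; destruct (P x y H1 H2) as (p0&p1&p2&p3); unfold exdxV;
    split; [|split; [|split]]; [exact (C2_exdx _ _ _ p0)|exact (C2_exdx _ _ _ p1)|exact (C2_exdx _ _ _ p2)|exact (C2_exdx _ _ _ p3)]. }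
  assert (exY : forall x y, Omega x y -> 0 <= y -> exdyV psi x y).
  { intros x y H1 H2; destruct (P x y H1 H2) as (p0&p1&p2&p3); unfold exdyV;
    split; [|split; [|split]]; [exact (C2_exdy _ _ _ p0)|exact (C2_exdy _ _ _ p1)|exact (C2_exdy _ _ _ p2)|exact (C2_exdy _ _ _ p3)]. }
  assert (exXX : forall x y, Omega x y -> 0 <= y -> exdxV (DX psi) x y).
  { intros x y H1 H2; destruct (P x y H1 H2) as (p0&p1&p2&p3); unfold exdxV;
    split; [|split; [|split]]; [exact (C2_exdxdx _ _ _ p0)|exact (C2_exdxdx _ _ _ p1)|exact (C2_exdxdx _ _ _ p2)|exact (C2_exdxdx _ _ _ p3)]. }
  assert (exXY : forall x y, Omega x y -> 0 <= y -> exdxV (DY psi) x y).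
  { intros x y H1 H2; destruct (P x y H1 H2) as (p0&p1&p2&p3); unfold exdxV;
    split; [|split; [|split]]; [exact (C2_exdxdy _ _ _ p0)|exact (C2_exdxdy _ _ _ p1)|exact (C2_exdxdy _ _ _ p2)|exact (C2_exdxdy _ _ _ p3)]. }
  assert (exYX : forall x y, Omega x y -> 0 <= y -> exdyV (DX psi) x y).
  { intros x y H1 H2; destruct (P x y H1 H2) as (p0&p1&p2&p3); unfold exdyV;
    split; [|split; [|split]]; [exact (C2_exdydx _ _ _ p0)|exact (C2_exdydx _ _ _ p1)|exact (C2_exdydx _ _ _ p2)|exact (C2_exdydx _ _ _ p3)]. }
  assert (exYY : forall x y, Omega x y -> 0 <= y -> exdyV (DY psi) x y).
  { intros x y H1 H2; destruct (P x y H1 H2) as (p0&p1&p2&p3); unfold exdyV;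
    split; [|split; [|split]]; [exact (C2_exdydy _ _ _ p0)|exact (C2_exdydy _ _ _ p1)|exact (C2_exdydy _ _ _ p2)|exact (C2_exdydy _ _ _ p3)]. }
  assert (axis : forall s, Omega s 0 -> exists e, 0 < e /\ forall r, s <= r -> r < s + e -> Omega r 0).
  { intros s Hs. destruct (HO s 0 Hs) as [e [He Hb]]. exists e; split; auto.
    intros r h1 h2. apply Hb; [apply Rabs_def1; lra|rewrite Rminus_0_r, Rabs_R0; lra]. }
  assert (vert : exists e, 0 < e /\ forall r, 0 <= r -> r < 0 + e -> Omega x0 r).
  { destruct (HO x0 0 Hx0) as [e [He Hb]]. exists e; split; auto.
    intros r h1 h2. apply Hb; [rewrite Rminus_diag, Rabs_R0; lra|apply Rabs_def1; lra]. }
  assert (g2 : forall s, Omega s 0 -> lor (DX psi s 0) a = 0).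
  { intros s Hs. destruct (axis s Hs) as [e [He Hb]].
    apply (halfline_zero (fun t => lor (psi t 0) a) s _ e); auto.
    - apply D4_lor_c. apply D4_x. apply exX; auto; lra.
    - intros r h1 h2. rewrite (proj2 (Hpl r (Hb r h1 h2))), (proj2 (Hpl s Hs)). reflexivity. }
  assert (g3 : lor (DX (DX psi) x0 0) a = 0).
  { destruct (axis x0 Hx0) as [e [He Hb]].
    apply (halfline_zero (fun t => lor (DX psi t 0) a) x0 _ e); auto.
    - apply D4_lor_c. apply D4_x. apply exXX; auto; lra.
    - intros r h1 h2. rewrite (g2 r (Hb r h1 h2)), (g2 x0 Hx0). reflexivity. }
  set (Pp := psi x0 0). set (T := DX psi x0 0). set (S := DY psi x0 0).
  assert (H2c : forall x y, Omega x y -> 0 <= y -> lor (Nvec (psi x y)) (Nvec (psi x y)) = -1).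
  { intros x y H1 H2. destruct (Hconf x y H1 H2) as [[Hh _] _]. rewrite lor_NN. lra. }
  assert (g4a : lor T (Nvec Pp) = 0).
  { destruct (axis x0 Hx0) as [e [He Hb]].
    assert (D : D4 (fun t => Nvec (psi t 0)) x0 (Nvec T)) by (apply D4_N; apply D4_x; apply exX; auto; lra).
    pose proof (D4_lor _ _ _ _ _ D D) as K.
    assert (Z := halfline_zero _ x0 _ e K He).
    assert (Z' : lor (Nvec T) (Nvec (psi x0 0)) + lor (Nvec (psi x0 0)) (Nvec T) = 0).
    { apply Z. intros r h1 h2. rewrite (H2c r 0), (H2c x0 0); auto; lra. }
    rewrite lor_NN_l, (lor_sym (Nvec _)), lor_NN_l in Z'. fold Pp in Z'. lra. }
  assert (g4b : lor S (Nvec Pp) = 0).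
  { destruct vert as [e [He Hb]].
    assert (D : D4 (fun t => Nvec (psi x0 t)) 0 (Nvec S)) by (apply D4_N; apply D4_y; apply exY; auto; lra).
    pose proof (D4_lor _ _ _ _ _ D D) as K.
    assert (Z := halfline_zero _ 0 _ e K He).
    assert (Z' : lor (Nvec S) (Nvec (psi x0 0)) + lor (Nvec (psi x0 0)) (Nvec S) = 0).
    { apply Z. intros r h1 h2. rewrite (H2c x0 r), (H2c x0 0); auto; lra. }
    rewrite lor_NN_l, (lor_sym (Nvec _)), lor_NN_l in Z'. fold Pp in Z'. lra. }
  destruct (Hconf x0 0 Hx0 (Rle_refl 0)) as [Hh [c1' [c2' c3']]]. fold Pp T S in Hh, c1', c2', c3'.
  pose proof (Hna n Hn) as Hnaz.
  destruct Hn as [n1 [n2 [n3 n4]]]. fold Pp T S in n1, n3, n4.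
  assert (g7 : lor (Nvec Pp) a = 0) by (rewrite lor_Nvec_a by auto; apply (Hpl x0 Hx0)).
  assert (g8 : lor (Nvec Pp) (Nvec Pp) = -1) by (apply H2c; auto; lra).
  set (w := vadd S (vscal (- lor S a) a)).
  assert (Hw : c0 w = 0 /\ c1 w = 0 /\ c2 w = 0 /\ c3 w = 0).
  { assert (tA : lor T a = 0) by (apply g2; auto).
    assert (tn : lor T n = 0) by (rewrite lor_sym; auto).
    assert (hp : lor T T * 1 * -1 * 1 <> 0) by (intro Hz; nra).
    assert (w1 : lor T w = 0) by (unfold w; rewrite lor_vadd_r, lor_scal_r, c2', tA; ring).
    assert (w2 : lor n w = 0) by (unfold w; rewrite lor_vadd_r, lor_scal_r, n4, Hnaz; ring).
    assert (w3 : lor (Nvec Pp) w = 0) by (unfold w; rewrite lor_vadd_r, lor_scal_r, (lor_sym _ S), g4b, g7; ring).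
    assert (w4 : lor a w = 0) by (unfold w; rewrite lor_vadd_r, lor_scal_r, Haa, (lor_sym a S); ring).
    exact (frame4 T n (Nvec Pp) a w (lor T T) 1 (-1) 1 eq_refl n2 g8 Haa hp tn g4a tA n1 Hnaz g7 w1 w2 w3 w4). }
  assert (HS : S = vscal (lor S a) a).
  { destruct Hw as (w0&w1&w2&w3). unfold w, vadd, vscal in w0, w1, w2, w3; simpl in w0, w1, w2, w3.
    apply V4_ext; simpl; lra. }
  split; [exact HS|].
  assert (Hs : DX (DY psi) x0 0 = DY (DX psi) x0 0).
  { destruct HC as (h0&h1&h2&h3). assert (Hu : U x0 0) by (apply HOU; auto; lra).
    apply V4_ext.
    - exact (schwarz_C2 (cmp0 psi) U x0 0 HUo h0 Hu).
    - exact (schwarz_C2 (cmp1 psi) U x0 0 HUo h1 Hu).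
    - exact (schwarz_C2 (cmp2 psi) U x0 0 HUo h2 Hu).
    - exact (schwarz_C2 (cmp3 psi) U x0 0 HUo h3 Hu). }
  assert (HF : lor (DX (DX psi) x0 0) S + lor T (DX (DY psi) x0 0) = 0).
  { destruct (axis x0 Hx0) as [e [He Hb]].
    assert (D1 : D4 (fun t => DX psi t 0) x0 (DX (DX psi) x0 0)) by (apply D4_x; apply exXX; auto; lra).
    assert (D2 : D4 (fun t => DY psi t 0) x0 (DX (DY psi) x0 0)) by (apply D4_x; apply exXY; auto; lra).
    pose proof (D4_lor _ _ _ _ _ D1 D2) as K.
    apply (halfline_zero _ x0 _ e K He). intros r h1 h2.
    destruct (Hconf r 0 (Hb r h1 h2) (Rle_refl 0)) as [_ [_ [k _]]].
    rewrite k. fold T S. rewrite c2'. reflexivity. }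
  assert (HEG : (lor (DY (DX psi) x0 0) T + lor T (DY (DX psi) x0 0)) +
                (-1) * (lor (DY (DY psi) x0 0) S + lor S (DY (DY psi) x0 0)) = 0).
  { destruct vert as [e [He Hb]].
    assert (D1 : D4 (fun t => DX psi x0 t) 0 (DY (DX psi) x0 0)) by (apply D4_y; apply exYX; auto; lra).
    assert (D2 : D4 (fun t => DY psi x0 t) 0 (DY (DY psi) x0 0)) by (apply D4_y; apply exYY; auto; lra).
    pose proof (isd_plus _ _ _ _ _ (D4_lor _ _ _ _ _ D1 D1) (isd_scal _ _ (-1) _ (D4_lor _ _ _ _ _ D2 D2))) as K.
    apply (halfline_zero _ 0 _ e K He). intros r h1 h2.
    destruct (Hconf x0 r (Hb r h1 h2) h1) as [_ [k _]].
    cbv beta. rewrite k. fold T S. rewrite c1'. ring. }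
  assert (HLS : lor (LapV psi x0 0) S = 0).
  { rewrite LapV_split, lor_vadd_l. rewrite Hs in HF.
    rewrite (lor_sym T (DY (DX psi) x0 0)), (lor_sym S (DY (DY psi) x0 0)) in HEG.
    rewrite (lor_sym T (DY (DX psi) x0 0)) in HF. lra. }
  assert (Hc : lor S a <> 0).
  { intro Hz. assert (lor S S = 0) by (rewrite HS at 1; rewrite lor_scal_l, Hz; ring). lra. }
  assert (HLa : lor (LapV psi x0 0) a = 0).
  { rewrite HS, lor_scal_r in HLS. apply Rmult_integral in HLS. destruct HLS; [contradiction|auto]. }
  rewrite LapV_split, lor_vadd_l, g3 in HLa. lra.
Qed.

Lemma lin_vals m f (U : R -> R -> Prop) x y : open2 U -> C2V f U -> U x y ->
  dx (lin m f) x y = linv m (DX f x y) /\ dy (lin m f) x y = linv m (DY f x y) /\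
  dx (dx (lin m f)) x y = linv m (DX (DX f) x y) /\ dy (dy (lin m f)) x y = linv m (DY (DY f) x y).
Proof.
  intros HU HC Hu.
  assert (P : forall x y, U x y -> C2Vpt f x y) by (intros; apply (C2V_pt f U); auto).
  assert (EX : forall x y, U x y -> exdxV f x y)
    by (intros x0 y0 H0; destruct (P x0 y0 H0) as (a&b&c&d); unfold exdxV; csplit; apply C2_exdx; auto).
  assert (EY : forall x y, U x y -> exdyV f x y)
    by (intros x0 y0 H0; destruct (P x0 y0 H0) as (a&b&c&d); unfold exdyV; csplit; apply C2_exdy; auto).
  assert (EXX : forall x y, U x y -> exdxV (DX f) x y)
    by (intros x0 y0 H0; destruct (P x0 y0 H0) as (a&b&c&d); unfold exdxV; csplit; apply C2_exdxdx; auto).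
  assert (EYY : forall x y, U x y -> exdyV (DY f) x y)
    by (intros x0 y0 H0; destruct (P x0 y0 H0) as (a&b&c&d); unfold exdyV; csplit; apply C2_exdydy; auto).
  pose proof (bx_lin m f U x y HU Hu EX) as BX.
  pose proof (by_lin m f U x y HU Hu EY) as BY.
  split; [|split; [|split]].
  - unfold dx at 1. apply is_derive_unique. apply dx_lin_at; auto.
  - unfold dy at 1. apply is_derive_unique. apply dy_lin_at; auto.
  - rewrite <- (proj1 (box_eq_dx _ _ _ _ BX)). unfold dx at 1. apply is_derive_unique. apply dx_lin_at; auto.
  - rewrite <- (proj1 (box_eq_dy _ _ _ _ BY)). unfold dy at 1. apply is_derive_unique. apply dy_lin_at; auto.
Qed.

Lemma axis_ext (O : R -> R -> Prop) (F G : R -> R -> R) x : open2 O -> O x 0 ->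
  (forall t, O t 0 -> F t 0 = G t 0) -> dx F x 0 = dx G x 0.
Proof.
  intros HO Hx H. destruct (HO x 0 Hx) as [e [He Hb]]. unfold dx.
  apply Derive_ext_loc. apply (loc_of _ _ e He). intros t Ht. apply H. apply Hb; auto.
  rewrite Rminus_diag, Rabs_R0; lra.
Qed.

Lemma sig_iso a u v : lor a a = 1 -> lor (sigma a u) (sigma a v) = lor u v.
Proof.
  intros Haa.
  assert (E : lor (sigma a u) (sigma a v) = lor u v + 4 * lor u a * lor v a * (lor a a - 1))
    by (unfold sigma, vadd, vscal, lor; simpl; ring).
  rewrite E, Haa. ring.
Qed.
Lemma sig_N a p : c3 a = 0 -> Nvec (sigma a p) = sigma a (Nvec p).
Proof. intros H. apply V4_ext; unfold sigma, vadd, vscal, Nvec, lor; simpl; rewrite H; ring. Qed.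
Lemma sig_c3 a p : c3 a = 0 -> c3 (sigma a p) = c3 p.
Proof. intros H. unfold sigma, vadd, vscal; simpl. rewrite H. ring. Qed.
Lemma sigma_fix a p : lor p a = 0 -> sigma a p = p.
Proof. intros H. apply V4_ext; unfold sigma, vadd, vscal; simpl; rewrite H; ring. Qed.
Lemma sigma_anti a v : lor a a = 1 -> v = vscal (lor v a) a -> sigma a v = vscal (-1) v.
Proof.
  intros Haa H. remember (lor v a) as c.
  assert (E0 : c0 v = c * c0 a) by (rewrite H; reflexivity).
  assert (E1 : c1 v = c * c1 a) by (rewrite H; reflexivity).
  assert (E2 : c2 v = c * c2 a) by (rewrite H; reflexivity).
  assert (E3 : c3 v = c * c3 a) by (rewrite H; reflexivity).
  apply V4_ext; unfold sigma, vadd, vscal; simpl; rewrite <- Heqc; lra.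
Qed.
Lemma lor_m1_l u v : lor (vscal (-1) u) v = - lor u v.
Proof. unfold lor, vscal; simpl; ring. Qed.
Lemma lor_m1_r u v : lor u (vscal (-1) v) = - lor u v.
Proof. unfold lor, vscal; simpl; ring. Qed.

Lemma time_orient p0 p1 p2 q0 q1 q2 : 0 < p0 -> - p0 ^ 2 + p1 ^ 2 + p2 ^ 2 = -1 ->
  - q0 ^ 2 + q1 ^ 2 + q2 ^ 2 = -1 -> - p0 * q0 + p1 * q1 + p2 * q2 < 0 -> 0 < q0.
Proof.
  intros Hp Hpp Hqq Hpq.
  destruct (Rlt_or_le 0 q0) as [|Hq]; auto. exfalso.
  assert (H1 : p0 * q0 <= 0) by nra.
  assert (H2 : p1 * q1 + p2 * q2 < p0 * q0) by lra.
  assert (H3 : (p0 * q0) ^ 2 = (p1 * q1 + p2 * q2) ^ 2 + (p1 * q2 - p2 * q1) ^ 2 + 1 + p1^2 + p2^2 + q1^2 + q2^2).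
  { replace ((p0 * q0) ^ 2) with (p0^2 * q0^2) by ring.
    replace (p0^2) with (1 + p1^2 + p2^2) by lra. replace (q0^2) with (1 + q1^2 + q2^2) by lra. ring. }
  assert (H4 : (p0 * q0) ^ 2 < (p1 * q1 + p2 * q2) ^ 2) by nra.
  assert (0 <= (p1 * q2 - p2 * q1) ^ 2) by apply pow2_ge_0.
  assert (0 <= p1 ^ 2) by apply pow2_ge_0. assert (0 <= p2 ^ 2) by apply pow2_ge_0.
  assert (0 <= q1 ^ 2) by apply pow2_ge_0. assert (0 <= q2 ^ 2) by apply pow2_ge_0.
  lra.
Qed.

Lemma sig_H2 a p : vertical_plane a -> in_H2xR p -> in_H2xR (sigma a p).
Proof.
  intros [Ha3 Haa] [Hp Hp0].
  assert (NN : lor (Nvec (sigma a p)) (Nvec (sigma a p)) = -1).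
  { rewrite sig_N, sig_iso, lor_NN by auto. lra. }
  split.
  - rewrite lor_NN in NN. exact NN.
  - assert (Hl : lor (Nvec p) (Nvec (sigma a p)) < 0).
    { rewrite sig_N by auto.
      assert (E : lor (Nvec p) (sigma a (Nvec p)) = lor (Nvec p) (Nvec p) - 2 * lor (Nvec p) a * lor (Nvec p) a)
        by (unfold sigma, vadd, vscal, lor; simpl; ring).
      rewrite E, lor_NN. pose proof (Rle_0_sqr (lor (Nvec p) a)) as Hsq. unfold Rsqr in Hsq. lra. }
    rewrite lor_NN in NN. unfold lor, Nvec in Hl; cbn [c0 c1 c2 c3] in Hl.
    apply (time_orient (c0 p) (c1 p) (c2 p) _ (c1 (sigma a p)) (c2 (sigma a p))); auto; lra.
Qed.

Lemma V4_eta v : mk4 (c0 v) (c1 v) (c2 v) (c3 v) = v.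
Proof. destruct v; reflexivity. Qed.

Definition e0 := mk4 1 0 0 0.
Definition sc0 (a : V4) := mk4 (1 + 2 * c0 a * c0 a) (-2 * c0 a * c1 a) (-2 * c0 a * c2 a) (-2 * c0 a * c3 a).
Lemma row0 a v : linv (sc0 a) v = linv e0 (sigma a v).
Proof. unfold linv, sc0, e0, sigma, vadd, vscal, lor; simpl; ring. Qed.
Lemma linv_e0 v : linv e0 v = c0 v.
Proof. unfold linv, e0; simpl; ring. Qed.
Lemma cmp_refl0 a psi : cmp0 (reflected a psi) = glue (lin e0 psi) (lin (sc0 a) psi).
Proof.
  apply functional_extensionality; intro x; apply functional_extensionality; intro y.
  unfold cmp0, reflected, glue, lin. destruct (Rle_dec 0 y).
  - rewrite linv_e0. reflexivity.
  - rewrite row0, linv_e0. reflexivity.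
Qed.

Definition e1 := mk4 0 1 0 0.
Definition sc1 (a : V4) := mk4 (2 * c1 a * c0 a) (1 - 2 * c1 a * c1 a) (-2 * c1 a * c2 a) (-2 * c1 a * c3 a).
Lemma row1 a v : linv (sc1 a) v = linv e1 (sigma a v).
Proof. unfold linv, sc1, e1, sigma, vadd, vscal, lor; simpl; ring. Qed.
Lemma linv_e1 v : linv e1 v = c1 v.
Proof. unfold linv, e1; simpl; ring. Qed.
Lemma cmp_refl1 a psi : cmp1 (reflected a psi) = glue (lin e1 psi) (lin (sc1 a) psi).
Proof.
  apply functional_extensionality; intro x; apply functional_extensionality; intro y.
  unfold cmp1, reflected, glue, lin. destruct (Rle_dec 0 y).
  - rewrite linv_e1. reflexivity.
  - rewrite row1, linv_e1. reflexivity.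
Qed.

Definition e2 := mk4 0 0 1 0.
Definition sc2 (a : V4) := mk4 (2 * c2 a * c0 a) (-2 * c2 a * c1 a) (1 - 2 * c2 a * c2 a) (-2 * c2 a * c3 a).
Lemma row2 a v : linv (sc2 a) v = linv e2 (sigma a v).
Proof. unfold linv, sc2, e2, sigma, vadd, vscal, lor; simpl; ring. Qed.
Lemma linv_e2 v : linv e2 v = c2 v.
Proof. unfold linv, e2; simpl; ring. Qed.
Lemma cmp_refl2 a psi : cmp2 (reflected a psi) = glue (lin e2 psi) (lin (sc2 a) psi).
Proof.
  apply functional_extensionality; intro x; apply functional_extensionality; intro y.
  unfold cmp2, reflected, glue, lin. destruct (Rle_dec 0 y).
  - rewrite linv_e2. reflexivity.
  - rewrite row2, linv_e2. reflexivity.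
Qed.

Definition e3 := mk4 0 0 0 1.
Definition sc3 (a : V4) := mk4 (2 * c3 a * c0 a) (-2 * c3 a * c1 a) (-2 * c3 a * c2 a) (1 - 2 * c3 a * c3 a).
Lemma row3 a v : linv (sc3 a) v = linv e3 (sigma a v).
Proof. unfold linv, sc3, e3, sigma, vadd, vscal, lor; simpl; ring. Qed.
Lemma linv_e3 v : linv e3 v = c3 v.
Proof. unfold linv, e3; simpl; ring. Qed.
Lemma cmp_refl3 a psi : cmp3 (reflected a psi) = glue (lin e3 psi) (lin (sc3 a) psi).
Proof.
  apply functional_extensionality; intro x; apply functional_extensionality; intro y.
  unfold cmp3, reflected, glue, lin. destruct (Rle_dec 0 y).
  - rewrite linv_e3. reflexivity.
  - rewrite row3, linv_e3. reflexivity.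
Qed.

Theorem mainTheorem13 (Omega : R -> R -> Prop) (a : V4) (psi : R -> R -> V4) :
  is_domain Omega ->
  (forall x y, Omega x y -> Omega x (- y)) ->
  vertical_plane a ->
  (exists U : R -> R -> Prop, open2 U /\
     (forall x y, Omega x y -> 0 <= y -> U x y) /\ C2V psi U) ->
  (forall x y, Omega x y -> 0 <= y -> conformal_immersion_at psi x y) ->
  (forall x y, Omega x y -> 0 <= y -> regular_vertical_projection_at psi x y) ->
  (forall x y, Omega x y -> 0 <= y -> mean_curvature_up_at psi (1/2) x y) ->
  (forall x, Omega x 0 -> in_plane a (psi x 0)) ->
  (forall x, Omega x 0 -> forall n, unit_normal psi x 0 n -> lor n a = 0) ->
  C2V (reflected a psi) Omega /\
  (forall x y, Omega x y ->
     conformal_immersion_at (reflected a psi) x y /\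
     mean_curvature_up_at (reflected a psi) (1/2) x y).
Proof.
  intros Hdom Hsym Hva HUex Hconf Hreg Hmc Hpl Hna.
  destruct Hdom as [HO _]. destruct HUex as [U [HUo [HOU HC]]].
  pose proof Hva as [Ha3 Haa].
  assert (CL : forall m, C2 (lin m psi) U) by (intro; apply C2_lin; auto).
  assert (LV : forall m x y, U x y -> dx (lin m psi) x y = linv m (DX psi x y) /\ dy (lin m psi) x y = linv m (DY psi x y) /\
     dx (dx (lin m psi)) x y = linv m (DX (DX psi) x y) /\ dy (dy (lin m psi)) x y = linv m (DY (DY psi) x y))
    by (intros; apply (lin_vals m psi U); auto).
  assert (Geo : forall x, Omega x 0 -> DY psi x 0 = vscal (lor (DY psi x 0) a) a /\ lor (DY (DY psi) x 0) a = 0).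
  { intros x Hx. apply (axis_geo Omega U a psi x); auto.
    - destruct (Hmc x 0 Hx (Rle_refl 0)) as [n [Hn _]]. exists n; exact Hn.
    - intros n Hn. exact (Hna x Hx n Hn). }
  assert (U0 : forall x, Omega x 0 -> U x 0) by (intros; apply HOU; auto; lra).
  assert (AX : forall e m, (forall v, linv m v = linv e (sigma a v)) -> forall x, Omega x 0 -> axis_hyp (lin e psi) (lin m psi) x).
  { intros e m Hem.
    assert (A1 : forall t, Omega t 0 -> lin m psi t 0 = lin e psi t 0).
    { intros t Ht. unfold lin. rewrite Hem, sigma_fix; auto. apply (Hpl t Ht). }
    assert (A3 : forall t, Omega t 0 -> dx (lin m psi) t 0 = dx (lin e psi) t 0)
      by (intros t Ht; apply (axis_ext Omega); auto).
    assert (B1 : forall t, Omega t 0 -> dy (lin m psi) t 0 = - dy (lin e psi) t 0).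
    { intros t Ht. destruct (LV m t 0 (U0 t Ht)) as [_ [-> _]]. destruct (LV e t 0 (U0 t Ht)) as [_ [-> _]].
      rewrite Hem, (sigma_anti a _ Haa (proj1 (Geo t Ht))). unfold linv, vscal; simpl; ring. }
    assert (B5 : forall x, Omega x 0 -> dx (dy (lin m psi)) x 0 = - dx (dy (lin e psi)) x 0).
    { intros x Hx. transitivity (dx (fun x y => - dy (lin e psi) x y) x 0).
      - apply (axis_ext Omega); auto.
      - rewrite dx_opp. reflexivity. }
    intros x Hx. unfold axis_hyp.
    split; [|split; [|split; [|split; [|split; [|split]]]]].
    - apply A1; auto.
    - apply B1; auto.
    - apply A3; auto.
    - apply (axis_ext Omega); auto.
    - apply B5; auto.
    - rewrite <- (schwarz_C2 _ U x 0 HUo (CL m) (U0 x Hx)), <- (schwarz_C2 _ U x 0 HUo (CL e) (U0 x Hx)).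
      apply B5; auto.
    - destruct (LV m x 0 (U0 x Hx)) as [_ [_ [_ ->]]]. destruct (LV e x 0 (U0 x Hx)) as [_ [_ [_ ->]]].
      rewrite Hem, sigma_fix; auto. apply (Geo x Hx). }
  assert (GM : forall e m, (forall v, linv m v = linv e (sigma a v)) ->
    C2 (glue (lin e psi) (lin m psi)) Omega /\
    (forall x y, Omega x y -> 0 <= y -> dy (glue (lin e psi) (lin m psi)) x y = dy (lin e psi) x y /\
         dy (dy (glue (lin e psi) (lin m psi))) x y = dy (dy (lin e psi)) x y) /\
    (forall x y, Omega x y -> y < 0 -> dy (glue (lin e psi) (lin m psi)) x y = - dy (lin m psi) x (-y) /\
         dy (dy (glue (lin e psi) (lin m psi))) x y = dy (dy (lin m psi)) x (-y))).
  { intros e m Hem. apply (glue_main Omega U); auto. }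
  assert (CV : forall e m, (forall v, linv m v = linv e (sigma a v)) -> forall x y, Omega x y ->
    (0 <= y -> glue (lin e psi) (lin m psi) x y = linv e (psi x y) /\
               dx (glue (lin e psi) (lin m psi)) x y = linv e (DX psi x y) /\
               dy (glue (lin e psi) (lin m psi)) x y = linv e (DY psi x y) /\
               dx (dx (glue (lin e psi) (lin m psi))) x y = linv e (DX (DX psi) x y) /\
               dy (dy (glue (lin e psi) (lin m psi))) x y = linv e (DY (DY psi) x y)) /\
    (y < 0 -> glue (lin e psi) (lin m psi) x y = linv m (psi x (-y)) /\
               dx (glue (lin e psi) (lin m psi)) x y = linv m (DX psi x (-y)) /\
               dy (glue (lin e psi) (lin m psi)) x y = - linv m (DY psi x (-y)) /\
               dx (dx (glue (lin e psi) (lin m psi))) x y = linv m (DX (DX psi) x (-y)) /\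
               dy (dy (glue (lin e psi) (lin m psi))) x y = linv m (DY (DY psi) x (-y)))).
  { intros e m Hem x y Hxy. destruct (GM e m Hem) as [_ [Gp Gn]]. split; intros Hy.
    - assert (Hu : U x y) by auto. destruct (LV e x y Hu) as (l1&l2&l3&l4).
      destruct (Gp x y Hxy Hy) as [E1 E2]. rewrite E1, E2, !dx_glue, !glue_pos by auto.
      rewrite l1, l2, l3, l4. split; [reflexivity|csplit; reflexivity].
    - assert (Hu : U x (-y)) by (apply HOU; [apply Hsym; auto|lra]). destruct (LV m x (-y) Hu) as (l1&l2&l3&l4).
      destruct (Gn x y Hxy Hy) as [E1 E2]. rewrite E1, E2, !dx_glue, !glue_neg by auto.
      rewrite l1, l2, l3, l4. split; [reflexivity|csplit; reflexivity]. }
  assert (K0 : forall x y, Omega x y ->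
    (0 <= y -> cmp0 (reflected a psi) x y = c0 (psi x y) /\
               dx (cmp0 (reflected a psi)) x y = c0 (DX psi x y) /\
               dy (cmp0 (reflected a psi)) x y = c0 (DY psi x y) /\
               dx (dx (cmp0 (reflected a psi))) x y = c0 (DX (DX psi) x y) /\
               dy (dy (cmp0 (reflected a psi))) x y = c0 (DY (DY psi) x y)) /\
    (y < 0 -> cmp0 (reflected a psi) x y = c0 (sigma a (psi x (-y))) /\
               dx (cmp0 (reflected a psi)) x y = c0 (sigma a (DX psi x (-y))) /\
               dy (cmp0 (reflected a psi)) x y = - c0 (sigma a (DY psi x (-y))) /\
               dx (dx (cmp0 (reflected a psi))) x y = c0 (sigma a (DX (DX psi) x (-y))) /\
               dy (dy (cmp0 (reflected a psi))) x y = c0 (sigma a (DY (DY psi) x (-y))))).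
  { intros x y Hxy. rewrite cmp_refl0. destruct (CV e0 (sc0 a) (row0 a) x y Hxy) as [P1 P2]. split; intros Hy.
    - destruct (P1 Hy) as (q1&q2&q3&q4&q5). rewrite q1, q2, q3, q4, q5, !linv_e0. csplit; reflexivity.
    - destruct (P2 Hy) as (q1&q2&q3&q4&q5). rewrite q1, q2, q3, q4, q5, !row0, !linv_e0. csplit; reflexivity. }
  assert (K1 : forall x y, Omega x y ->
    (0 <= y -> cmp1 (reflected a psi) x y = c1 (psi x y) /\
               dx (cmp1 (reflected a psi)) x y = c1 (DX psi x y) /\
               dy (cmp1 (reflected a psi)) x y = c1 (DY psi x y) /\
               dx (dx (cmp1 (reflected a psi))) x y = c1 (DX (DX psi) x y) /\
               dy (dy (cmp1 (reflected a psi))) x y = c1 (DY (DY psi) x y)) /\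
    (y < 0 -> cmp1 (reflected a psi) x y = c1 (sigma a (psi x (-y))) /\
               dx (cmp1 (reflected a psi)) x y = c1 (sigma a (DX psi x (-y))) /\
               dy (cmp1 (reflected a psi)) x y = - c1 (sigma a (DY psi x (-y))) /\
               dx (dx (cmp1 (reflected a psi))) x y = c1 (sigma a (DX (DX psi) x (-y))) /\
               dy (dy (cmp1 (reflected a psi))) x y = c1 (sigma a (DY (DY psi) x (-y))))).
  { intros x y Hxy. rewrite cmp_refl1. destruct (CV e1 (sc1 a) (row1 a) x y Hxy) as [P1 P2]. split; intros Hy.
    - destruct (P1 Hy) as (q1&q2&q3&q4&q5). rewrite q1, q2, q3, q4, q5, !linv_e1. csplit; reflexivity.
    - destruct (P2 Hy) as (q1&q2&q3&q4&q5). rewrite q1, q2, q3, q4, q5, !row1, !linv_e1. csplit; reflexivity. }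
  assert (K2 : forall x y, Omega x y ->
    (0 <= y -> cmp2 (reflected a psi) x y = c2 (psi x y) /\
               dx (cmp2 (reflected a psi)) x y = c2 (DX psi x y) /\
               dy (cmp2 (reflected a psi)) x y = c2 (DY psi x y) /\
               dx (dx (cmp2 (reflected a psi))) x y = c2 (DX (DX psi) x y) /\
               dy (dy (cmp2 (reflected a psi))) x y = c2 (DY (DY psi) x y)) /\
    (y < 0 -> cmp2 (reflected a psi) x y = c2 (sigma a (psi x (-y))) /\
               dx (cmp2 (reflected a psi)) x y = c2 (sigma a (DX psi x (-y))) /\
               dy (cmp2 (reflected a psi)) x y = - c2 (sigma a (DY psi x (-y))) /\
               dx (dx (cmp2 (reflected a psi))) x y = c2 (sigma a (DX (DX psi) x (-y))) /\
               dy (dy (cmp2 (reflected a psi))) x y = c2 (sigma a (DY (DY psi) x (-y))))).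
  { intros x y Hxy. rewrite cmp_refl2. destruct (CV e2 (sc2 a) (row2 a) x y Hxy) as [P1 P2]. split; intros Hy.
    - destruct (P1 Hy) as (q1&q2&q3&q4&q5). rewrite q1, q2, q3, q4, q5, !linv_e2. csplit; reflexivity.
    - destruct (P2 Hy) as (q1&q2&q3&q4&q5). rewrite q1, q2, q3, q4, q5, !row2, !linv_e2. csplit; reflexivity. }
  assert (K3 : forall x y, Omega x y ->
    (0 <= y -> cmp3 (reflected a psi) x y = c3 (psi x y) /\
               dx (cmp3 (reflected a psi)) x y = c3 (DX psi x y) /\
               dy (cmp3 (reflected a psi)) x y = c3 (DY psi x y) /\
               dx (dx (cmp3 (reflected a psi))) x y = c3 (DX (DX psi) x y) /\
               dy (dy (cmp3 (reflected a psi))) x y = c3 (DY (DY psi) x y)) /\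
    (y < 0 -> cmp3 (reflected a psi) x y = c3 (sigma a (psi x (-y))) /\
               dx (cmp3 (reflected a psi)) x y = c3 (sigma a (DX psi x (-y))) /\
               dy (cmp3 (reflected a psi)) x y = - c3 (sigma a (DY psi x (-y))) /\
               dx (dx (cmp3 (reflected a psi))) x y = c3 (sigma a (DX (DX psi) x (-y))) /\
               dy (dy (cmp3 (reflected a psi))) x y = c3 (sigma a (DY (DY psi) x (-y))))).
  { intros x y Hxy. rewrite cmp_refl3. destruct (CV e3 (sc3 a) (row3 a) x y Hxy) as [P1 P2]. split; intros Hy.
    - destruct (P1 Hy) as (q1&q2&q3&q4&q5). rewrite q1, q2, q3, q4, q5, !linv_e3. csplit; reflexivity.
    - destruct (P2 Hy) as (q1&q2&q3&q4&q5). rewrite q1, q2, q3, q4, q5, !row3, !linv_e3. csplit; reflexivity. }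
  split.
  - unfold C2V. rewrite cmp_refl0, cmp_refl1, cmp_refl2, cmp_refl3.
    split; [|split; [|split]]; apply GM; apply row0 || apply row1 || apply row2 || apply row3.
  - intros x y Hxy. destruct (Rle_or_lt 0 y) as [Hy|Hy].
    + destruct (proj1 (K0 x y Hxy) Hy) as (k01&k02&k03&k04&k05).
      destruct (proj1 (K1 x y Hxy) Hy) as (k11&k12&k13&k14&k15).
      destruct (proj1 (K2 x y Hxy) Hy) as (k21&k22&k23&k24&k25).
      destruct (proj1 (K3 x y Hxy) Hy) as (k31&k32&k33&k34&k35).
      assert (Rr : reflected a psi x y = psi x y) by (unfold reflected; destruct (Rle_dec 0 y); [reflexivity|lra]).
      assert (RX : DX (reflected a psi) x y = DX psi x y)
        by (unfold DX at 1; rewrite k02, k12, k22, k32; apply V4_eta).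
      assert (RY : DY (reflected a psi) x y = DY psi x y)
        by (unfold DY at 1; rewrite k03, k13, k23, k33; apply V4_eta).
      assert (RL : LapV (reflected a psi) x y = LapV psi x y)
        by (unfold LapV at 1; rewrite k04, k05, k14, k15, k24, k25, k34, k35; reflexivity).
      split.
      * unfold conformal_immersion_at. rewrite Rr, RX, RY. apply Hconf; auto.
      * unfold mean_curvature_up_at, unit_normal. rewrite Rr, RX, RY, RL. apply Hmc; auto.
    + destruct (proj2 (K0 x y Hxy) Hy) as (k01&k02&k03&k04&k05).
      destruct (proj2 (K1 x y Hxy) Hy) as (k11&k12&k13&k14&k15).
      destruct (proj2 (K2 x y Hxy) Hy) as (k21&k22&k23&k24&k25).
      destruct (proj2 (K3 x y Hxy) Hy) as (k31&k32&k33&k34&k35).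
      assert (Hx' : Omega x (-y)) by auto. assert (Hy' : 0 <= - y) by lra.
      assert (Rr : reflected a psi x y = sigma a (psi x (-y)))
        by (unfold reflected; destruct (Rle_dec 0 y); [lra|reflexivity]).
      assert (RX : DX (reflected a psi) x y = sigma a (DX psi x (-y)))
        by (unfold DX at 1; rewrite k02, k12, k22, k32; apply V4_eta).
      assert (RY : DY (reflected a psi) x y = vscal (-1) (sigma a (DY psi x (-y)))).
      { unfold DY at 1; rewrite k03, k13, k23, k33. unfold vscal. f_equal; ring. }
      assert (RL : LapV (reflected a psi) x y = sigma a (LapV psi x (-y))).
      { unfold LapV at 1; rewrite k04, k05, k14, k15, k24, k25, k34, k35.
        rewrite (LapV_split psi x (-y)).
        apply V4_ext; unfold sigma, vadd, vscal, lor; cbn [c0 c1 c2 c3]; ring. }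
      split.
      * unfold conformal_immersion_at. rewrite Rr, RX, RY. rewrite lor_m1_l, lor_m1_r, lor_m1_r, !sig_iso by auto.
        destruct (Hconf x (-y) Hx' Hy') as (c1'&c2'&c3'&c4').
        split; [apply sig_H2; auto|split; [lra|split; [lra|lra]]].
      * destruct (Hmc x (-y) Hx' Hy') as [n [[n1 [n2 [n3 n4]]] [n5 n6]]].
        exists (sigma a n). unfold unit_normal. rewrite Rr, RX, RY, RL, sig_N by auto.
        rewrite lor_m1_r, !sig_iso, sig_c3 by auto.
        split; [split; [auto|split; [auto|split; [auto|lra]]]|split; [auto|auto]].
Qed.
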